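(* Let $d>e\ge1$. The set $S_{d,e}\subseteq\mathbb{C}^{d+e-2}$ is compact.
   Context: For a tuple $(a_{d-1},\dots,a_1,b_{e-1},\dots,b_1)\in\mathbb{C}^{d+e-2}$ consider the correspondence $C=\{(x,y)\in\mathbb{C}^2: y^e+b_{e-1}y^{e-1}+\cdots+b_1y=x^d+a_{d-1}x^{d-1}+\cdots+a_1x\}$. Writing it as $g(y)=f(x)$, a critical point is $a\in\mathbb{C}$ with $f'(a)=0$ or $g'(b)=0$ for some $b$ with $g(b)=f(a)$. A path is a sequence $(x_n)_{n\ge0}$ with $(x_n,x_{n+1})\in C$ for all $n$, starting at $x_0$; it is bounded if $\sup_n|x_n|<\infty$. $S_{d,e}$ is the set of tuples for which every critical point of $C$ is the starting point of at least one bounded path. *)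

(* Defs.v *)
From Stdlib Require Import Reals List Lia.
Open Scope R_scope.

Definition C : Type := (R * R)%type.
Definition C0 : C := (0, 0).
Definition C1 : C := (1, 0).
Definition Cadd (z w : C) : C := (fst z + fst w, snd z + snd w).
Definition Cmul (z w : C) : C :=
  (fst z * fst w - snd z * snd w, fst z * snd w + snd z * fst w).
Definition CofR (r : R) : C := (r, 0).
Fixpoint Cpow (z : C) (n : nat) : C :=
  match n with O => C1 | S k => Cmul z (Cpow z k) end.
Definition Cnorm (z : C) : R := sqrt (fst z * fst z + snd z * snd z).
Definition Cdist (z w : C) : R := Cnorm (fst z - fst w, snd z - snd w).

(* ---------- The monic polynomials without constant term ----------
   For a coefficient function c (c i = coefficient of X^i, used for 1 <= i < n),
   poly n c x = x^n + c (n-1) x^(n-1) + ... + c 1 x. *)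
Definition poly (n : nat) (c : nat -> C) (x : C) : C :=
  fold_right Cadd (Cpow x n)
    (map (fun i => Cmul (c i) (Cpow x i)) (seq 1 (n - 1))).

Definition dpoly (n : nat) (c : nat -> C) (x : C) : C :=
  fold_right Cadd (Cmul (CofR (INR n)) (Cpow x (n - 1)))
    (map (fun i => Cmul (Cmul (CofR (INR i)) (c i)) (Cpow x (i - 1))) (seq 1 (n - 1))).

(* ---------- Points of C^(d+e-2) ----------
   A point p of C^(d+e-2) is represented by p : nat -> C, of which only the
   coordinates p 0, ..., p (d+e-3) are meaningful; the tuple is
   (a_{d-1},...,a_1,b_{e-1},...,b_1), i.e. p i = a_{d-1-i} for i < d-1 and
   p (d-1+j) = b_{e-1-j} for j < e-1. *)
Definition coef_a (d : nat) (p : nat -> C) (i : nat) : C := p (d - 1 - i)%nat.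
Definition coef_b (d e : nat) (p : nat -> C) (i : nat) : C := p (d - 1 + (e - 1 - i))%nat.

Definition fpol (d : nat) (p : nat -> C) : C -> C := poly d (coef_a d p).
Definition gpol (d e : nat) (p : nat -> C) : C -> C := poly e (coef_b d e p).
Definition dfpol (d : nat) (p : nat -> C) : C -> C := dpoly d (coef_a d p).
Definition dgpol (d e : nat) (p : nat -> C) : C -> C := dpoly e (coef_b d e p).

Definition in_corr (d e : nat) (p : nat -> C) (x y : C) : Prop :=
  gpol d e p y = fpol d p x.

Definition critical_point (d e : nat) (p : nat -> C) (a : C) : Prop :=
  dfpol d p a = C0 \/ exists b : C, dgpol d e p b = C0 /\ gpol d e p b = fpol d p a.

Definition is_path (d e : nat) (p : nat -> C) (x0 : C) (x : nat -> C) : Prop :=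
  x 0%nat = x0 /\ forall n : nat, in_corr d e p (x n) (x (S n)).

Definition bounded_seq (x : nat -> C) : Prop :=
  exists M : R, forall n : nat, Cnorm (x n) <= M.

Definition S_de (d e : nat) (p : nat -> C) : Prop :=
  forall a : C, critical_point d e p a ->
    exists x : nat -> C, is_path d e p a x /\ bounded_seq x.

(* ---------- Topology of C^n ----------
   sup distance on the first n coordinates (it induces the standard topology). *)
Definition dist_n (n : nat) (p q : nat -> C) (r : R) : Prop :=
  forall i : nat, (i < n)%nat -> Cdist (p i) (q i) < r.

Definition open_n (n : nat) (U : (nat -> C) -> Prop) : Prop :=
  forall p, U p -> exists r : R, 0 < r /\ forall q, dist_n n p q r -> U q.

Definition compact_n (n : nat) (K : (nat -> C) -> Prop) : Prop :=
  forall (I : Type) (U : I -> (nat -> C) -> Prop),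
    (forall i, open_n n (U i)) ->
    (forall p, K p -> exists i, U i p) ->
    exists l : list I, forall p, K p -> exists i, In i l /\ U i p.

(* Main.v *)
Require Import Defs.
From Stdlib Require Import Reals List Lia.
From Stdlib Require Import Lra Psatz ClassicalEpsilon Classical Arith.
Require Import Defs.
Set Warnings "-notation-overridden -ambiguous-paths -notation-incompatible-prefix".
From HB Require structures.
From mathcomp Require all_boot all_order all_algebra.
From mathcomp Require Rstruct.
From mathcomp.real_closed Require complex.
From mathcomp Require all_classical all_reals all_analysis Rstruct_topology finmap.
Open Scope R_scope.

Definition Csub (z w : C) : C := (fst z - fst w, snd z - snd w).
Definition Copp (z : C) : C := (- fst z, - snd z).

Ltac Cdes := repeat match goal with
  | z : C |- _ => let a := fresh "a" in let b := fresh "b" in destruct z as [a b]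
  end.
Ltac Ceq := Cdes; unfold Cadd, Cmul, Csub, Copp, CofR, C0, C1 in *; simpl; f_equal; ring.

Lemma Cadd_comm z w : Cadd z w = Cadd w z. Proof. Ceq. Qed.
Lemma Cadd_assoc z w u : Cadd z (Cadd w u) = Cadd (Cadd z w) u. Proof. Ceq. Qed.
Lemma Cadd_0_l z : Cadd C0 z = z. Proof. Ceq. Qed.
Lemma Cadd_0_r z : Cadd z C0 = z. Proof. Ceq. Qed.
Lemma Cmul_comm z w : Cmul z w = Cmul w z. Proof. Ceq. Qed.
Lemma Cmul_assoc z w u : Cmul z (Cmul w u) = Cmul (Cmul z w) u. Proof. Ceq. Qed.
Lemma Cmul_1_l z : Cmul C1 z = z. Proof. Ceq. Qed.
Lemma Cmul_0_l z : Cmul C0 z = C0. Proof. Ceq. Qed.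
Lemma Cmul_add_r z w u : Cmul z (Cadd w u) = Cadd (Cmul z w) (Cmul z u). Proof. Ceq. Qed.

Lemma Cnorm_ge0 z : 0 <= Cnorm z.
Proof. unfold Cnorm; apply sqrt_pos. Qed.

Lemma Cnorm_sq z : Cnorm z * Cnorm z = fst z * fst z + snd z * snd z.
Proof. unfold Cnorm; rewrite sqrt_sqrt; nra. Qed.

Lemma Cnorm_mul z w : Cnorm (Cmul z w) = Cnorm z * Cnorm w.
Proof.
  unfold Cnorm, Cmul; simpl. rewrite <- sqrt_mult_alt by nra. f_equal; ring.
Qed.

Lemma Cnorm_le_iff z r : 0 <= r -> (Cnorm z <= r <-> fst z * fst z + snd z * snd z <= r * r).
Proof.
  intro hr. pose proof (Cnorm_ge0 z). rewrite <- Cnorm_sq. split; intro; nra.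
Qed.

Lemma Cnorm_add z w : Cnorm (Cadd z w) <= Cnorm z + Cnorm w.
Proof.
  pose proof (Cnorm_ge0 z); pose proof (Cnorm_ge0 w).
  apply Cnorm_le_iff; [lra|].
  pose proof (Cnorm_sq z); pose proof (Cnorm_sq w).
  destruct z as [a b], w as [c d]; unfold Cadd; cbn [fst snd] in *.
  assert (a*c + b*d <= Cnorm (a,b) * Cnorm (c,d)).
  { destruct (Rle_dec (a*c+b*d) 0). nra.
    assert (hsq : (a*c+b*d)*(a*c+b*d) <= (Cnorm (a,b) * Cnorm (c,d))*(Cnorm (a,b) * Cnorm (c,d))).
    { replace ((Cnorm (a,b) * Cnorm (c,d))*(Cnorm (a,b) * Cnorm (c,d))) with
        ((Cnorm (a,b) * Cnorm (a,b))*(Cnorm (c,d) * Cnorm (c,d))) by ring.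
      rewrite H1, H2. pose proof (Rle_0_sqr (a*d-b*c)); unfold Rsqr in *; nra. }
    set (X := Cnorm (a,b) * Cnorm (c,d)) in *. assert (0 <= X) by (apply Rmult_le_pos; lra). nra. }
  nra.
Qed.

Lemma Cnorm_CofR r : Cnorm (CofR r) = Rabs r.
Proof. unfold Cnorm, CofR; simpl. replace (r*r+0*0) with (r*r) by ring. apply sqrt_Rsqr_abs. Qed.

Lemma Cnorm_C0 : Cnorm C0 = 0.
Proof. unfold Cnorm, C0; simpl. replace (0*0+0*0) with 0 by ring. apply sqrt_0. Qed.
Lemma Cnorm_C1 : Cnorm C1 = 1.
Proof. unfold Cnorm, C1; simpl. replace (1*1+0*0) with 1 by ring. apply sqrt_1. Qed.

Lemma Cnorm_pow z k : Cnorm (Cpow z k) = Cnorm z ^ k.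
Proof. induction k; simpl. apply Cnorm_C1. rewrite Cnorm_mul, IHk; ring. Qed.

Lemma Cnorm_eq0 z : Cnorm z = 0 -> z = C0.
Proof.
  intro h. pose proof (Cnorm_sq z). rewrite h in H. destruct z as [a b]; simpl in *.
  unfold C0; f_equal; nra.
Qed.

Lemma Cnorm_sub_sym z w : Cnorm (Csub z w) = Cnorm (Csub w z).
Proof. unfold Cnorm, Csub; simpl; f_equal; ring. Qed.

Lemma Csub_add z w : Cadd (Csub z w) w = z.
Proof. Ceq. Qed.

Lemma Cnorm_rev z w : Cnorm z - Cnorm w <= Cnorm (Csub z w).
Proof. pose proof (Cnorm_add (Csub z w) w). rewrite Csub_add in H. lra. Qed.

Lemma Cnorm_sub_le z w : Cnorm (Csub z w) <= Cnorm z + Cnorm w.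
Proof.
  replace (Csub z w) with (Cadd z (Copp w)) by Ceq.
  replace (Cnorm w) with (Cnorm (Copp w)). apply Cnorm_add.
  unfold Cnorm, Copp; simpl; f_equal; ring.
Qed.

Lemma Cdist_tri x y z : Cnorm (Csub x z) <= Cnorm (Csub x y) + Cnorm (Csub y z).
Proof. replace (Csub x z) with (Cadd (Csub x y) (Csub y z)) by Ceq. apply Cnorm_add. Qed.

Lemma Cnorm_sub_self z : Cnorm (Csub z z) = 0.
Proof. replace (Csub z z) with C0 by Ceq. apply Cnorm_C0. Qed.

Lemma Cnorm_sub_eq0 z w : Cnorm (Csub z w) = 0 -> z = w.
Proof. intro h. apply Cnorm_eq0 in h. destruct z, w; unfold Csub, C0 in h; simpl in h.
  injection h; intros; f_equal; lra. Qed.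

Lemma Cnorm_le_abs z : Cnorm z <= Rabs (fst z) + Rabs (snd z).
Proof.
  apply Cnorm_le_iff. pose proof (Rabs_pos (fst z)); pose proof (Rabs_pos (snd z)); lra.
  destruct z as [a b]; simpl. pose proof (Rabs_pos a); pose proof (Rabs_pos b).
  assert (Rabs a * Rabs a = a * a) by (rewrite <- Rabs_mult; apply Rabs_right; nra).
  assert (Rabs b * Rabs b = b * b) by (rewrite <- Rabs_mult; apply Rabs_right; nra).
  nra.
Qed.

Lemma Rabs_fst_le z : Rabs (fst z) <= Cnorm z.
Proof.
  pose proof (Cnorm_ge0 z). pose proof (Cnorm_sq z). rewrite <- (Rabs_right (Cnorm z)) by lra.
  apply Rsqr_le_abs_0. unfold Rsqr. pose proof (Rle_0_sqr (snd z)); pose proof (Rle_0_sqr (fst z)); unfold Rsqr in *. nra.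
Qed.

Lemma Rabs_snd_le z : Rabs (snd z) <= Cnorm z.
Proof.
  pose proof (Cnorm_ge0 z). pose proof (Cnorm_sq z). rewrite <- (Rabs_right (Cnorm z)) by lra.
  apply Rsqr_le_abs_0. unfold Rsqr. pose proof (Rle_0_sqr (snd z)); pose proof (Rle_0_sqr (fst z)); unfold Rsqr in *. nra.
Qed.

Fixpoint Fsum (k : nat) (t : nat -> C) : C :=
  match k with O => C0 | S k => Cadd (Fsum k t) (t k) end.
Fixpoint Rsum (k : nat) (t : nat -> R) : R :=
  match k with O => 0 | S k => Rsum k t + t k end.
Definition fp (m : nat) (c : nat -> C) (x : C) : C :=
  Fsum (S m) (fun i => Cmul (c i) (Cpow x i)).

Lemma Fsum_ext k t t' : (forall i, (i < k)%nat -> t i = t' i) -> Fsum k t = Fsum k t'.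
Proof. induction k; intros h; simpl; auto. rewrite IHk by (intros; apply h; lia). rewrite h by lia; auto. Qed.

Lemma Rsum_ext k t t' : (forall i, (i < k)%nat -> t i = t' i) -> Rsum k t = Rsum k t'.
Proof. induction k; intros h; simpl; auto. rewrite IHk by (intros; apply h; lia). rewrite h by lia; auto. Qed.

Lemma Fsum_shift k t : Fsum (S k) t = Cadd (t O) (Fsum k (fun i => t (S i))).
Proof. induction k; simpl in *. Ceq. rewrite IHk. Ceq. Qed.

Lemma fold_map_seq (h : nat -> C) z a k :
  fold_right Cadd z (map h (seq a k)) = Cadd (Fsum k (fun i => h (a + i)%nat)) z.
Proof.
  revert a. induction k; intro a. simpl. Ceq.
  cbn [seq map fold_right]. rewrite IHk. rewrite Fsum_shift. replace (a+0)%nat with a by lia.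
  rewrite (Fsum_ext k (fun i => h (a + S i)%nat) (fun i => h (S a + i)%nat)) by (intros; f_equal; lia).
  Ceq.
Qed.

Lemma Cnorm_Fsum k t : Cnorm (Fsum k t) <= Rsum k (fun i => Cnorm (t i)).
Proof. induction k; simpl. rewrite Cnorm_C0; lra. eapply Rle_trans. apply Cnorm_add. lra. Qed.

Lemma Rsum_le k t t' : (forall i, (i < k)%nat -> t i <= t' i) -> Rsum k t <= Rsum k t'.
Proof. induction k; intros h; simpl. lra. assert (Rsum k t <= Rsum k t') by (apply IHk; intros; apply h; lia).
  pose proof (h k ltac:(lia)). lra. Qed.

Lemma Rsum_const k B : Rsum k (fun _ => B) = INR k * B.
Proof. induction k; simpl Rsum. simpl; ring. rewrite IHk, S_INR; ring. Qed.

Lemma Rsum_le_const k t B : (forall i, (i < k)%nat -> t i <= B) -> Rsum k t <= INR k * B.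
Proof. intro h. rewrite <- Rsum_const. apply Rsum_le; auto. Qed.

Lemma Fsum_sub k t t' : Csub (Fsum k t) (Fsum k t') = Fsum k (fun i => Csub (t i) (t' i)).
Proof. induction k; simpl. Ceq. rewrite <- IHk. Ceq. Qed.

Definition pc (n : nat) (c : nat -> C) (i : nat) : C :=
  if Nat.eqb i 0 then C0 else if Nat.eqb i n then C1 else c i.
Definition dc (n : nat) (c : nat -> C) (i : nat) : C :=
  if Nat.eqb (S i) n then CofR (INR n) else Cmul (CofR (INR (S i))) (c (S i)).

Lemma poly_fp n c x : (1 <= n)%nat -> poly n c x = fp n (pc n c) x.
Proof.
  intro hn. destruct n as [|m]; [lia|]. unfold poly, fp.
  rewrite fold_map_seq. replace (S m - 1)%nat with m by lia.
  change (Fsum (S (S m)) ?T) with (Cadd (Fsum (S m) T) (T (S m))).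
  rewrite Fsum_shift.
  rewrite (Fsum_ext m (fun i => Cmul (pc (S m) c (S i)) (Cpow x (S i)))
                      (fun i => Cmul (c (1 + i)%nat) (Cpow x (1 + i)))).
  2:{ intros i hi. unfold pc. simpl Nat.eqb. destruct (Nat.eqb i m) eqn:E.
      apply Nat.eqb_eq in E; lia. reflexivity. }
  unfold pc. simpl Nat.eqb. rewrite Nat.eqb_refl. Ceq.
Qed.

Lemma dpoly_fp n c x : (1 <= n)%nat -> dpoly n c x = fp (n - 1) (dc n c) x.
Proof.
  intro hn. destruct n as [|m]; [lia|]. unfold dpoly, fp.
  rewrite fold_map_seq. replace (S m - 1)%nat with m by lia.
  change (Fsum (S m) ?T) with (Cadd (Fsum m T) (T m)).
  rewrite (Fsum_ext m (fun i => Cmul (dc (S m) c i) (Cpow x i))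
                      (fun i => Cmul (Cmul (CofR (INR (1 + i))) (c (1 + i)%nat)) (Cpow x (1 + i - 1)))).
  2:{ intros i hi. unfold dc. destruct (Nat.eqb (S i) (S m)) eqn:E.
      apply Nat.eqb_eq in E; lia. simpl. rewrite Nat.sub_0_r. reflexivity. }
  unfold dc. rewrite Nat.eqb_refl. reflexivity.
Qed.

Lemma pow_le_mono r i m : 1 <= r -> (i <= m)%nat -> r ^ i <= r ^ m.
Proof. intros. apply Rle_pow; auto. Qed.

Lemma Cpow_diff x x' r k : 1 <= r -> Cnorm x <= r -> Cnorm x' <= r ->
  Cnorm (Csub (Cpow x k) (Cpow x' k)) <= INR k * r ^ k * Cnorm (Csub x x').
Proof.
  intros hr hx hx'. induction k.
  - simpl. replace (Csub C1 C1) with C0 by Ceq. rewrite Cnorm_C0. lra.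
  - simpl Cpow. replace (Csub (Cmul x (Cpow x k)) (Cmul x' (Cpow x' k))) with
      (Cadd (Cmul x (Csub (Cpow x k) (Cpow x' k))) (Cmul (Csub x x') (Cpow x' k))) by Ceq.
    eapply Rle_trans. apply Cnorm_add. rewrite !Cnorm_mul, Cnorm_pow.
    pose proof (Cnorm_ge0 x); pose proof (Cnorm_ge0 x'); pose proof (Cnorm_ge0 (Csub x x')).
    pose proof (Cnorm_ge0 (Csub (Cpow x k) (Cpow x' k))).
    assert (Cnorm x' ^ k <= r ^ k) by (apply pow_incr; lra).
    assert (1 <= r ^ k) by (apply pow_R1_Rle; lra).
    assert (0 <= INR k) by apply pos_INR.
    rewrite S_INR. simpl pow.
    assert (Cnorm x * Cnorm (Csub (Cpow x k) (Cpow x' k)) <= r * (INR k * r ^ k * Cnorm (Csub x x'))).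
    { apply Rmult_le_compat; auto. }
    assert (Cnorm (Csub x x') * Cnorm x' ^ k <= Cnorm (Csub x x') * (r * r^k)).
    { apply Rmult_le_compat_l; auto. nra. }
    nra.
Qed.

Lemma fp_lip m c c' x x' r M d :
  1 <= r -> Cnorm x <= r -> Cnorm x' <= r ->
  (forall i, (i <= m)%nat -> Cnorm (Csub (c i) (c' i)) <= d) ->
  (forall i, (i <= m)%nat -> Cnorm (c' i) <= M) ->
  Cnorm (Csub (fp m c x) (fp m c' x')) <= INR (S m) * r ^ m * (d + M * INR m * Cnorm (Csub x x')).
Proof.
  intros hr hx hx' hd hM. unfold fp. rewrite Fsum_sub. eapply Rle_trans. apply Cnorm_Fsum.
  rewrite Rmult_assoc. apply Rsum_le_const. intros i hi. cbv beta.
  replace (Csub (Cmul (c i) (Cpow x i)) (Cmul (c' i) (Cpow x' i))) with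
    (Cadd (Cmul (Csub (c i) (c' i)) (Cpow x i)) (Cmul (c' i) (Csub (Cpow x i) (Cpow x' i)))) by Ceq.
  eapply Rle_trans. apply Cnorm_add. rewrite !Cnorm_mul, Cnorm_pow.
  assert (hi' : (i <= m)%nat) by lia.
  pose proof (hd i hi'); pose proof (hM i hi').
  pose proof (Cpow_diff x x' r i hr hx hx').
  pose proof (Cnorm_ge0 x); pose proof (Cnorm_ge0 (c' i)); pose proof (Cnorm_ge0 (Csub x x')).
  pose proof (Cnorm_ge0 (Csub (c i) (c' i))).
  assert (Cnorm x ^ i <= r ^ m).
  { apply Rle_trans with (r ^ i). apply pow_incr; lra. apply pow_le_mono; auto. }
  assert (INR i <= INR m) by (apply le_INR; lia).
  assert (r ^ i <= r ^ m) by (apply pow_le_mono; auto).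
  assert (0 <= INR i) by apply pos_INR.
  assert (1 <= r ^ i) by (apply pow_R1_Rle; lra).
  assert (Cnorm (Csub (c i) (c' i)) * Cnorm x ^ i <= d * r ^ m) by (apply Rmult_le_compat; auto; apply pow_le; auto).
  assert (Cnorm (c' i) * Cnorm (Csub (Cpow x i) (Cpow x' i)) <= M * (INR i * r ^ i * Cnorm (Csub x x'))).
  { apply Rmult_le_compat; auto. apply Cnorm_ge0. }
  assert (INR i * r ^ i * Cnorm (Csub x x') <= INR m * r ^ m * Cnorm (Csub x x')).
  { apply Rmult_le_compat_r; auto. apply Rmult_le_compat; auto; lra. }
  assert (0 <= M) by lra.
  assert (M * (INR i * r ^ i * Cnorm (Csub x x')) <= M * (INR m * r ^ m * Cnorm (Csub x x'))) by (apply Rmult_le_compat_l; auto).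
  nra.
Qed.

Lemma pc_0 m c : pc m c 0 = C0. Proof. reflexivity. Qed.
Lemma pc_m m c : (1 <= m)%nat -> pc m c m = C1.
Proof. intro. unfold pc. destruct (Nat.eqb m 0) eqn:E. apply Nat.eqb_eq in E; lia. rewrite Nat.eqb_refl; auto. Qed.
Lemma pc_mid m c i : (1 <= i)%nat -> (i < m)%nat -> pc m c i = c i.
Proof. intros. unfold pc. destruct (Nat.eqb i 0) eqn:E. apply Nat.eqb_eq in E; lia.
  destruct (Nat.eqb i m) eqn:E2. apply Nat.eqb_eq in E2; lia. auto. Qed.

Lemma esc_term s x m j k : 1 <= s -> (1 <= m)%nat -> (1 <= j)%nat -> 2 * INR m * s <= Cnorm x ->
  s ^ j * Cnorm x ^ k <= Cnorm x ^ (j + k) / (2 * INR m).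
Proof.
  intros hs hm hj hx.
  assert (h1 : 1 <= INR m) by (apply (le_INR 1); lia).
  assert (hpos : 0 < 2 * INR m) by lra.
  assert (h2 : 2 * INR m <= (2 * INR m) ^ j).
  { destruct j; [lia|]. simpl. rewrite <- (Rmult_1_r (2 * INR m)) at 1. apply Rmult_le_compat_l. lra.
    apply pow_R1_Rle; lra. }
  assert (h3 : (2 * INR m * s) ^ j <= Cnorm x ^ j) by (apply pow_incr; split; [nra|lra]).
  rewrite Rpow_mult_distr in h3.
  assert (0 <= Cnorm x ^ k) by (apply pow_le, Cnorm_ge0).
  assert (0 <= s ^ j) by (apply pow_le; lra).
  rewrite pow_add. apply Rmult_le_reg_r with (2 * INR m); auto.
  replace (Cnorm x ^ j * Cnorm x ^ k / (2 * INR m) * (2 * INR m)) with (Cnorm x ^ j * Cnorm x ^ k) by (field; lra).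
  assert (2 * INR m * s ^ j <= (2 * INR m)^j * s^j) by (apply Rmult_le_compat_r; lra).
  nra.
Qed.

Lemma poly_lower m c s x : (1 <= m)%nat -> 1 <= s ->
  (forall k, (1 <= k)%nat -> (k < m)%nat -> Cnorm (c k) <= s ^ (m - k)) ->
  2 * INR m * s <= Cnorm x -> Cnorm x ^ m / 2 <= Cnorm (poly m c x).
Proof.
  intros hm hs hc hx. rewrite poly_fp by auto. unfold fp.
  change (Fsum (S m) ?T) with (Cadd (Fsum m T) (T m)). cbv beta.
  rewrite pc_m by auto. rewrite Cmul_1_l.
  pose proof (Cnorm_rev (Cpow x m) (Copp (Fsum m (fun i => Cmul (pc m c i) (Cpow x i))))).
  replace (Csub (Cpow x m) (Copp (Fsum m (fun i => Cmul (pc m c i) (Cpow x i))))) with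
    (Cadd (Fsum m (fun i => Cmul (pc m c i) (Cpow x i))) (Cpow x m)) in H by Ceq.
  replace (Cnorm (Copp (Fsum m (fun i : nat => Cmul (pc m c i) (Cpow x i))))) with
    (Cnorm (Fsum m (fun i : nat => Cmul (pc m c i) (Cpow x i)))) in H by (unfold Cnorm, Copp; simpl; f_equal; ring).
  rewrite Cnorm_pow in H.
  assert (Cnorm (Fsum m (fun i => Cmul (pc m c i) (Cpow x i))) <= INR m * (Cnorm x ^ m / (2 * INR m))).
  { eapply Rle_trans. apply Cnorm_Fsum. apply Rsum_le_const. intros i hi.
    rewrite Cnorm_mul, Cnorm_pow. destruct i as [|i].
    - rewrite pc_0, Cnorm_C0, Rmult_0_l. apply Rmult_le_pos. apply pow_le, Cnorm_ge0.
      apply Rlt_le, Rinv_0_lt_compat. assert (1 <= INR m) by (apply (le_INR 1); lia). lra.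
    - rewrite pc_mid by lia.
      apply Rle_trans with (s ^ (m - S i) * Cnorm x ^ S i).
      apply Rmult_le_compat_r. apply pow_le, Cnorm_ge0. apply hc; lia.
      pose proof (esc_term s x m (m - S i) (S i) hs hm ltac:(lia) hx) as hE.
      replace (m - S i + S i)%nat with m in hE by lia. exact hE. }
  assert (1 <= INR m) by (apply (le_INR 1); lia).
  replace (INR m * (Cnorm x ^ m / (2 * INR m))) with (Cnorm x ^ m / 2) in H0 by (field; lra).
  lra.
Qed.

Lemma poly_upper m c t y : (1 <= m)%nat -> 1 <= t ->
  (forall k, (1 <= k)%nat -> (k < m)%nat -> Cnorm (c k) <= t ^ (m - k)) ->
  Cnorm (poly m c y) <= INR (S m) * Rmax (Cnorm y) t ^ m.
Proof.
  intros hm ht hc. rewrite poly_fp by auto. unfold fp.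
  eapply Rle_trans. apply Cnorm_Fsum. apply Rsum_le_const. intros i hi.
  rewrite Cnorm_mul, Cnorm_pow.
  set (u := Rmax (Cnorm y) t).
  assert (hu1 : Cnorm y <= u) by apply Rmax_l. assert (hu2 : t <= u) by apply Rmax_r.
  pose proof (Cnorm_ge0 y).
  assert (Cnorm y ^ i <= u ^ i) by (apply pow_incr; lra).
  assert (0 <= Cnorm y ^ i) by (apply pow_le; lra).
  destruct i as [|i].
  - rewrite pc_0, Cnorm_C0. rewrite Rmult_0_l. apply pow_le; lra.
  - destruct (Nat.eq_dec (S i) m) as [e|e].
    + subst m. rewrite pc_m, Cnorm_C1 by lia. lra.
    + rewrite pc_mid by lia.
      apply Rle_trans with (t ^ (m - S i) * u ^ S i).
      apply Rmult_le_compat; auto. apply Cnorm_ge0. apply hc; lia.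
      replace (u ^ m) with (u ^ (m - S i) * u ^ S i) by (rewrite <- pow_add; f_equal; lia).
      apply Rmult_le_compat_r. apply pow_le; lra. apply pow_incr; lra.
Qed.

Lemma poly_upper_small m c t y : (1 <= m)%nat -> 1 <= t ->
  (forall k, (1 <= k)%nat -> (k < m)%nat -> Cnorm (c k) <= t ^ (m - k)) ->
  Cnorm y <= t -> Cnorm (poly m c y) <= INR (S m) * (Cnorm y * t ^ (m - 1)).
Proof.
  intros hm ht hc hy. rewrite poly_fp by auto. unfold fp.
  eapply Rle_trans. apply Cnorm_Fsum. apply Rsum_le_const. intros i hi.
  rewrite Cnorm_mul, Cnorm_pow.
  pose proof (Cnorm_ge0 y).
  assert (0 <= t ^ (m - 1)) by (apply pow_le; lra).
  destruct i as [|i].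
  - rewrite pc_0, Cnorm_C0. rewrite Rmult_0_l. nra.
  - assert (hyi : Cnorm y ^ S i <= Cnorm y * t ^ i).
    { simpl. apply Rmult_le_compat_l; auto. apply pow_incr; lra. }
    assert (0 <= t ^ i) by (apply pow_le; lra).
    destruct (Nat.eq_dec (S i) m) as [e|e].
    + subst m. rewrite pc_m, Cnorm_C1 by lia. replace (S i - 1)%nat with i by lia. lra.
    + rewrite pc_mid by lia.
      apply Rle_trans with (t ^ (m - S i) * (Cnorm y * t ^ i)).
      apply Rmult_le_compat; auto. apply Cnorm_ge0. apply pow_le; lra. apply hc; lia.
      replace (m - 1)%nat with ((m - S i) + i)%nat by lia. rewrite pow_add.
      assert (0 <= t ^ (m - S i)) by (apply pow_le; lra). nra.
Qed.

Module Bridge.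
Import HB.structures all_boot all_order all_algebra Rstruct complex.
Import Order.TTheory GRing.Theory Num.Theory.
Local Open Scope ring_scope.
Local Open Scope complex_scope.

Definition phi (z : Defs.C) : R[i] := Complex z.1 z.2.
Definition psi (z : R[i]) : Defs.C := let: Complex a b := z in (a, b).

Lemma phi_psi z : phi (psi z) = z. Proof. by case: z. Qed.
Lemma psi_phi z : psi (phi z) = z. Proof. by case: z. Qed.
Lemma phi_inj z w : phi z = phi w -> z = w.
Proof. by move=> h; rewrite -(psi_phi z) h psi_phi. Qed.

Lemma phi_add z w : phi (Cadd z w) = phi z + phi w. Proof. by case: z; case: w. Qed.
Lemma phi_mul z w : phi (Cmul z w) = phi z * phi w. Proof. by case: z; case: w. Qed.
Lemma phi_sub z w : phi (Csub z w) = phi z - phi w. Proof. by case: z; case: w. Qed.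
Lemma phi_C0 : phi C0 = 0. Proof. by []. Qed.
Lemma phi_C1 : phi C1 = 1. Proof. by []. Qed.
Lemma phi_pow z k : phi (Cpow z k) = phi z ^+ k.
Proof. elim: k => [|k IH] //=. by rewrite phi_mul IH exprS. Qed.

Lemma phi_Fsum k t : phi (Fsum k t) = \sum_(i < k) phi (t i).
Proof. elim: k => [|k IH] /=. by rewrite big_ord0. by rewrite phi_add IH big_ord_recr. Qed.

Definition bpoly (m : nat) (c : nat -> Defs.C) : {poly R[i]} := \poly_(i < m.+1) phi (c i).

Lemma phi_fp m c x : phi (fp m c x) = (bpoly m c).[phi x].
Proof.
  rewrite /fp phi_Fsum /bpoly horner_poly. apply: eq_bigr => i _. by rewrite phi_mul phi_pow.
Qed.

Definition Cprod (l : list Defs.C) : Defs.C := fold_right Cmul C1 l.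

Lemma phi_Cprod x (r : seq R[i]) :
  phi (Cprod (List.map (fun z => Csub x z) (List.map psi r))) = \prod_(z <- r) (phi x - z).
Proof.
  elim: r => [|z r IH] /=. by rewrite big_nil.
  by rewrite big_cons phi_mul phi_sub phi_psi IH.
Qed.

Lemma fact_fp m c : c m <> C0 ->
  exists rs : list Defs.C, length rs = m /\
    forall x, fp m c x = Cmul (c m) (Cprod (List.map (fun z => Csub x z) rs)).
Proof.
  move=> hc.
  have hlc : phi (c m) != 0.
  { apply/eqP => h. apply: hc. apply: phi_inj. by rewrite h. }
  have hsz : size (bpoly m c) = m.+1 by rewrite /bpoly size_poly_eq.
  have hlead : lead_coef (bpoly m c) = phi (c m).
  { by rewrite lead_coefE hsz /bpoly coef_poly ltnSn. }
  case: (closed_field_poly_normal (bpoly m c)) => r hr.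
  exists (List.map psi r). split.
  - rewrite length_map. move: hsz. rewrite hr size_scale; last by rewrite hlead.
    rewrite size_prod_XsubC. by case.
  - move=> x. apply: phi_inj. rewrite phi_fp phi_mul phi_Cprod.
    rewrite {1}hr hornerZ hlead horner_prod. congr (_ * _).
    apply: eq_bigr => z _. by rewrite hornerXsubC.
Qed.

End Bridge.

Module Core.
Import HB.structures all_boot all_order all_algebra Rstruct complex.
Import Order.TTheory GRing.Theory Num.Theory.
Local Open Scope ring_scope.
Local Open Scope complex_scope.

Notation F := (R[i]).

Lemma mupZ (c : F) (q : {poly F}) z : c != 0 -> q != 0 -> mup z (c *: q) = mup z q.
Proof.
  move=> hc hq. have hcq : c *: q != 0 by rewrite scaler_eq0 negb_or hc.
  apply/eqP; rewrite eqn_leq; apply/andP; split.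
  - by rewrite mup_geq // -(dvdpZr _ _ hc) -mup_geq.
  - by rewrite mup_geq // (dvdpZr _ _ hc) -mup_geq.
Qed.

Lemma mup_deriv_lt (P : {poly F}) z : P != 0 -> root P z -> (mup z P^`() < mup z P)%N \/ P^`() = 0.
Proof.
  move=> hP hz.
  have [hd|hd] := eqVneq P^`() 0; [by right|left].
  set k := mup z P.
  have hk : (1 <= k)%N by rewrite mup_geq // expr1 dvdp_XsubCl.
  have hdiv : ('X - z%:P) ^+ k %| P by rewrite -mup_geq.
  have hndiv : ~~ (('X - z%:P) ^+ k.+1 %| P) by rewrite -mup_ltn.
  case/dvdpP: hdiv => Q hQ.
  have hQz : ~~ root Q z.
  { apply/negP => hr. apply: (negP hndiv). rewrite hQ exprSr [X in X %| _]mulrC.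
    apply: dvdp_mul => //. by rewrite dvdp_XsubCl. }
  rewrite mup_ltn //. apply/negP => hdP.
  move: hdP. rewrite hQ derivM deriv_exp derivXsubC mul1r.
  rewrite dvdp_addr; last by apply: dvdp_mull; apply: dvdpp.
  have [j hj] : exists j, k = j.+1 by exists k.-1; rewrite prednK.
  rewrite hj /= exprS mulrnAr -mulrnAl dvdp_mul2r; last first.
  { by rewrite expf_neq0 // polyXsubC_eq0. }
  rewrite dvdp_XsubCl /root hornerMn mulrn_eq0 /= => h. by rewrite /root h in hQz.
Qed.

Lemma size_derivF (p : {poly F}) : size p^`() = (size p).-1.
Proof.
have [lep1|lt1p] := leqP (size p) 1.
  by rewrite {1}[p]size1_polyC // derivC size_poly0 -subn1 (eqnP lep1).
rewrite size_poly_eq // mulrn_eq0 -subn2 -subSn // subn2.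
by rewrite lead_coef_eq0 -size_poly_eq0 -(subnKC lt1p).
Qed.

Lemma prod_X (rs : seq F) : (forall z, z \in rs -> z = 0) ->
  \prod_(z <- rs) ('X - z%:P) = 'X ^+ size rs.
Proof.
  elim: rs => [|a rs IH] h /=. by rewrite big_nil.
  rewrite big_cons IH; last by move=> z hz; apply: h; rewrite inE hz orbT.
  by rewrite (h a) ?mem_head // subr0 exprS.
Qed.

Lemma core (P : {poly F}) (n : nat) : (2 <= n)%N -> P \is monic -> size P = n.+1 ->
  root P 0 -> (forall z, root P^`() z -> root P z) -> P = 'X ^+ n.
Proof.
  move=> hn hmon hsz h0 hcrit.
  have hP0 : P != 0 by rewrite -size_poly_eq0 hsz.
  case: (closed_field_poly_normal P) => rs hrs.
  rewrite (monicP hmon) scale1r in hrs.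
  have hszrs : size rs = n.
  { move: hsz. by rewrite hrs size_prod_XsubC => -[]. }
  have hd0 : P^`() != 0.
  { rewrite -size_poly_eq0 size_derivF hsz /=. apply/eqP => h. by rewrite h in hn. }
  case: (closed_field_poly_normal P^`()) => s hs.
  have hlc : lead_coef P^`() != 0 by rewrite lead_coef_eq0.
  have hszs : size s = n.-1.
  { have := size_derivF P. rewrite hsz /= hs size_scale // size_prod_XsubC. by move=> <-. }
  have hmuP : forall z, mup z P = count_mem z rs.
  { move=> z. by rewrite {1}hrs mu_prod_XsubC. }
  have hmuD : forall z, mup z P^`() = count_mem z s.
  { move=> z. rewrite {1}hs mupZ //. by rewrite mu_prod_XsubC.
    apply: monic_neq0. exact: monic_prod_XsubC. }
  have hcnt : forall z, z \in s -> (count_mem z s < count_mem z rs)%N.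
  { move=> z hz. have hr : root P z.
    { apply: hcrit. by rewrite hs rootZ // root_prod_XsubC. }
    case: (mup_deriv_lt P z hP0 hr) => [|h]; last by rewrite h eqxx in hd0.
    by rewrite hmuP hmuD. }
  have hle : forall x, (count_mem x (s ++ undup s) <= count_mem x rs)%N.
  { move=> x. rewrite count_cat (count_uniq_mem x (undup_uniq s)) mem_undup.
    case hx: (x \in s) => /=. by rewrite addn1; apply: hcnt.
    by rewrite addn0 (count_memPn (negbT hx)). }
  have hsize : (size s + size (undup s) <= size rs)%N.
  { case/count_subseqP: hle => s' hsub hperm.
    rewrite -size_cat (perm_size hperm). exact: size_subseq. }
  rewrite hszs hszrs in hsize.
  have hu : (size (undup s) <= 1)%N.
  { by rewrite -(leq_add2l n.-1) addn1 prednK // ltnW. }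
  have hsne : s != [::].
  { apply/eqP => h. move: hszs. rewrite h /= => h2. move: (hn). by rewrite -(prednK (ltnW hn)) -h2. }
  set z0 := head 0 s.
  have hz0 : z0 \in s by rewrite /z0 -nth0 mem_nth // lt0n size_eq0.
  have hall : forall x, x \in s -> x = z0.
  { move=> x hx. have hx' : x \in undup s by rewrite mem_undup.
    have hz0' : z0 \in undup s by rewrite mem_undup.
    move: hu hx' hz0'. case: (undup s) => [|a [|b l]] //= _.
    by rewrite !inE => /eqP -> /eqP ->. }
  have hcs : count_mem z0 s = size s.
  { apply/eqP. rewrite -all_count. apply/allP => x hx /=. by rewrite (hall x hx). }
  have hcr : count_mem z0 rs = size rs.
  { apply/eqP; rewrite eqn_leq count_size /=. rewrite hszrs.
    have := hcnt z0 hz0. rewrite hcs hszs. move=> h. by rewrite -(prednK (ltnW hn)). }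
  have hallr : forall x, x \in rs -> x = z0.
  { move=> x hx. move/eqP: hcr. rewrite -all_count => /allP /(_ x hx) /= /eqP. by []. }
  have h0rs : 0 \in rs by move: h0; rewrite hrs root_prod_XsubC.
  have hz00 : z0 = 0 by rewrite (hallr 0 h0rs).
  rewrite hrs prod_X ?hszrs //. move=> z hz. by rewrite (hallr z hz).
Qed.

End Core.

Module AL.
Import HB.structures all_boot all_order all_algebra Rstruct complex.
Import Order.TTheory GRing.Theory Num.Theory.
Import Bridge Core.
Local Open Scope ring_scope.
Local Open Scope complex_scope.

Lemma phi_CofR_nat (k : nat) : phi (CofR (INR k)) = k%:R.
Proof. rewrite /phi /CofR /= INRE. by rewrite -(rmorph_nat (real_complex R)). Qed.

Lemma bpoly_deriv n c : (1 <= n)%N ->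
  (bpoly n (pc n c))^`() = bpoly (n - 1) (dc n c).
Proof.
  move=> hn. apply/polyP => i. rewrite coef_deriv /bpoly !coef_poly.
  have -> : ((n - 1).+1 = n)%N by rewrite subn1 prednK.
  rewrite ltnS. case: (ltnP i n) => hi; last by rewrite mul0rn.
  rewrite /dc /pc. change (Nat.eqb (S i) 0) with false. case: (Nat.eqb_spec (S i) n) => [e|e].
  - by rewrite -e phi_CofR_nat phi_C1.
  - by rewrite phi_mul phi_CofR_nat mulr_natl.
Qed.

End AL.
Module AL2.
Import HB.structures all_boot all_order all_algebra Rstruct complex.
Local Open Scope ring_scope.

Lemma alg_lemma n c : le 2 n ->
  (forall z, dpoly n c z = C0 -> Defs.poly n c z = C0) ->
  forall k, le 1 k -> lt k n -> c k = C0.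
Proof.
  Import Order.TTheory GRing.Theory Num.Theory Bridge Core AL.
  move=> hn hcrit k hk1 hkn.
  have hn1 : (1 <= n)%N by apply/ssrnat.leP; lia.
  set P := bpoly n (pc n c).
  have hcoefn : phi (pc n c n) = 1%R.
  { rewrite /pc. have -> : Nat.eqb n 0 = false by apply/Nat.eqb_neq; lia.
    by rewrite Nat.eqb_refl. }
  have hsz : size P = n.+1 by rewrite /P /bpoly size_poly_eq //= hcoefn oner_neq0.
  have hmon : P \is monic.
  { by rewrite monicE lead_coefE hsz /P /bpoly coef_poly ltnSn hcoefn. }
  have h0 : root P 0.
  { by rewrite /root horner_coef0 /P /bpoly coef_poly. }
  have hcr : forall z, root P^`() z -> root P z.
  { move=> z. rewrite /P bpoly_deriv // /root -(phi_psi z) -phi_fp -phi_fp.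
    rewrite -dpoly_fp; last by apply/ssrnat.leP.
    rewrite -poly_fp; last by apply/ssrnat.leP.
    move/eqP => h. apply/eqP. rewrite hcrit. by []. apply: phi_inj. exact: h. }
  have hP := core P n (ltac:(by apply/ssrnat.leP)) hmon hsz h0 hcr.
  have : P`_k = ('X^n : {poly R[i]})`_k by rewrite hP.
  rewrite coefXn /P /bpoly coef_poly.
  have -> : (k < n.+1)%N by apply/ssrnat.leP; lia.
  have -> : (k == n) = false by apply/eqP; lia.
  rewrite /pc. have -> : Nat.eqb k 0 = false by apply/Nat.eqb_neq; lia.
  have -> : Nat.eqb k n = false by apply/Nat.eqb_neq; lia.
  move=> h. apply: phi_inj. exact: h.
Qed.
End AL2.

Notation Cprod := Bridge.Cprod.

Lemma fin_bound (f : nat -> R) m : exists M, forall i, (i <= m)%nat -> f i <= M.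
Proof.
  induction m. exists (f O). intros i hi. replace i with O by lia. lra.
  destruct IHm as [M hM]. exists (Rmax M (f (S m))). intros i hi.
  destruct (Nat.eq_dec i (S m)). subst; apply Rmax_r.
  eapply Rle_trans. apply hM; lia. apply Rmax_l.
Qed.

Lemma fin_bound_lt (f : nat -> R) n : exists M, 0 <= M /\ forall i, (i < n)%nat -> f i <= M.
Proof.
  destruct (fin_bound f n) as [M hM]. exists (Rmax 0 M). split. apply Rmax_l.
  intros i hi. eapply Rle_trans. apply hM; lia. apply Rmax_r.
Qed.

Lemma Cprod_ge x rs e : 0 <= e -> (forall r, In r rs -> e <= Cnorm (Csub x r)) ->
  e ^ length rs <= Cnorm (Cprod (map (fun z => Csub x z) rs)).
Proof.
  intros he. induction rs as [|a rs IH]; intros h; simpl.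
  - rewrite Cnorm_C1; lra.
  - rewrite Cnorm_mul. apply Rmult_le_compat; auto. apply pow_le; auto.
    apply h; left; auto. apply IH; intros; apply h; right; auto.
Qed.

Lemma Cprod_zero_in x rs : Cprod (map (fun z => Csub x z) rs) = C0 -> In x rs.
Proof.
  induction rs as [|a rs IH]; simpl; intro h.
  - unfold C1, C0 in h. injection h; lra.
  - assert (hn : Cnorm (Csub x a) * Cnorm (Cprod (map (fun z => Csub x z) rs)) = 0).
    { rewrite <- Cnorm_mul, h. apply Cnorm_C0. }
    apply Rmult_integral in hn. destruct hn as [hn|hn].
    + left. symmetry. apply Cnorm_sub_eq0; auto.
    + right. apply IH. apply Cnorm_eq0; auto.
Qed.

Lemma Cprod_in_zero x rs : In x rs -> Cprod (map (fun z => Csub x z) rs) = C0.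
Proof.
  induction rs as [|a rs IH]; simpl; intro h. contradiction.
  destruct h as [h|h].
  - subst. replace (Csub x x) with C0 by Ceq. apply Cmul_0_l.
  - rewrite IH by auto. Ceq.
Qed.

Lemma roots_list m c : c m <> C0 -> exists rs : list C,
  (forall r, In r rs -> fp m c r = C0) /\ (forall y, fp m c y = C0 -> In y rs).
Proof.
  intro hc. destruct (Bridge.fact_fp m c hc) as [rs [hl hf]]. exists rs. split.
  - intros r hr. rewrite hf, Cprod_in_zero by auto. Ceq.
  - intros y hy. rewrite hf in hy. apply Cprod_zero_in.
    assert (Cnorm (c m) * Cnorm (Cprod (map (fun z => Csub y z) rs)) = 0).
    { rewrite <- Cnorm_mul, hy. apply Cnorm_C0. }
    apply Rmult_integral in H. destruct H as [H|H].
    + exfalso. apply hc. apply Cnorm_eq0; auto.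
    + apply Cnorm_eq0; auto.
Qed.

Lemma root_near m c x e : c m <> C0 -> 0 < e ->
  Cnorm (fp m c x) < Cnorm (c m) * e ^ m ->
  exists r, fp m c r = C0 /\ Cnorm (Csub x r) < e.
Proof.
  intros hc he hx. destruct (Bridge.fact_fp m c hc) as [rs [hl hf]].
  destruct (Classical_Prop.classic (exists r, In r rs /\ Cnorm (Csub x r) < e)) as [[r [hr1 hr2]]|hno].
  - exists r. split; auto. rewrite hf, Cprod_in_zero by auto. Ceq.
  - exfalso. assert (h : e ^ m <= Cnorm (Cprod (map (fun z => Csub x z) rs))).
    { rewrite <- hl. apply Cprod_ge. lra. intros r hr.
      destruct (Rle_dec e (Cnorm (Csub x r))); auto. exfalso; apply hno; exists r; split; auto; lra. }
    rewrite hf, Cnorm_mul in hx.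
    pose proof (Cnorm_ge0 (c m)).
    assert (Cnorm (c m) <> 0) by (intro h0; apply hc, Cnorm_eq0; auto).
    nra.
Qed.

Lemma rc m c0 x0 : c0 m <> C0 -> fp m c0 x0 = C0 -> forall e, 0 < e ->
  exists eta, 0 < eta /\ forall c, c m = c0 m ->
    (forall i, (i <= m)%nat -> Cnorm (Csub (c i) (c0 i)) <= eta) ->
    exists r, fp m c r = C0 /\ Cnorm (Csub x0 r) < e.
Proof.
  intros hc h0 e he.
  destruct (fin_bound (fun i => Cnorm (c0 i)) m) as [M hM].
  set (r0 := Rmax 1 (Cnorm x0)).
  assert (hr0 : 1 <= r0) by apply Rmax_l.
  assert (hx0 : Cnorm x0 <= r0) by apply Rmax_r.
  assert (hlc : 0 < Cnorm (c0 m)).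
  { pose proof (Cnorm_ge0 (c0 m)). destruct (Req_dec (Cnorm (c0 m)) 0). exfalso; apply hc, Cnorm_eq0; auto. lra. }
  assert (hem : 0 < e ^ m) by (apply pow_lt; auto).
  assert (hrm : 0 < r0 ^ m) by (apply pow_lt; lra).
  assert (hm1 : 0 < INR (S m)) by (apply lt_0_INR; lia).
  exists (Cnorm (c0 m) * e ^ m / (2 * (INR (S m) * r0 ^ m))). split.
  { apply Rdiv_lt_0_compat. nra. nra. }
  intros c hcm hd. apply root_near. rewrite hcm; auto. auto.
  pose proof (fp_lip m c c0 x0 x0 r0 M _ hr0 hx0 hx0 hd hM) as hl.
  rewrite Cnorm_sub_self, Rmult_0_r, Rplus_0_r, h0 in hl.
  replace (Csub (fp m c x0) C0) with (fp m c x0) in hl by (destruct (fp m c x0); unfold Csub, C0; simpl; f_equal; ring).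
  rewrite hcm.
  replace (INR (S m) * r0 ^ m * (Cnorm (c0 m) * e ^ m / (2 * (INR (S m) * r0 ^ m)))) with
    (Cnorm (c0 m) * e ^ m / 2) in hl by (field; lra).
  nra.
Qed.

Definition setc0 (c : nat -> C) (w : C) (i : nat) : C := if Nat.eqb i 0 then w else c i.

Lemma fp_setc0 m c w y : fp m (setc0 c w) y = Cadd (fp m c y) (Csub w (c O)).
Proof.
  unfold fp. rewrite !Fsum_shift.
  rewrite (Fsum_ext m (fun i => Cmul (setc0 c w (S i)) (Cpow y (S i))) (fun i => Cmul (c (S i)) (Cpow y (S i)))) by reflexivity.
  unfold setc0; simpl. Ceq.
Qed.

Definition fc d p := pc d (coef_a d p).
Definition gc d e p := pc e (coef_b d e p).

Lemma fpol_fp d p x : (1 <= d)%nat -> fpol d p x = fp d (fc d p) x.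
Proof. intro. unfold fpol, fc. apply poly_fp; auto. Qed.
Lemma gpol_fp d e p x : (1 <= e)%nat -> gpol d e p x = fp e (gc d e p) x.
Proof. intro. unfold gpol, gc. apply poly_fp; auto. Qed.
Lemma dfpol_fp d p x : (1 <= d)%nat -> dfpol d p x = fp (d - 1) (dc d (coef_a d p)) x.
Proof. intro. unfold dfpol. apply dpoly_fp; auto. Qed.
Lemma dgpol_fp d e p x : (1 <= e)%nat -> dgpol d e p x = fp (e - 1) (dc e (coef_b d e p)) x.
Proof. intro. unfold dgpol. apply dpoly_fp; auto. Qed.

Lemma dist_mono n q p a b : dist_n n q p a -> a <= b -> dist_n n q p b.
Proof. intros h hab i hi. specialize (h i hi). lra. Qed.

Lemma dist_get n q p a i : dist_n n q p a -> (i < n)%nat -> Cnorm (Csub (p i) (q i)) < a.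
Proof. intros h hi. rewrite Cnorm_sub_sym. apply (h i hi). Qed.

Lemma coefa_close d e q p a : (1 <= e)%nat -> dist_n (d + e - 2) q p a ->
  forall i, (1 <= i)%nat -> (i < d)%nat -> Cnorm (Csub (coef_a d p i) (coef_a d q i)) < a.
Proof. intros he h i h1 h2. unfold coef_a. apply dist_get with (d + e - 2)%nat; auto. lia. Qed.

Lemma coefb_close d e q p a : (1 <= d)%nat -> dist_n (d + e - 2) q p a ->
  forall i, (1 <= i)%nat -> (i < e)%nat -> Cnorm (Csub (coef_b d e p i) (coef_b d e q i)) < a.
Proof. intros hd h i h1 h2. unfold coef_b. apply dist_get with (d + e - 2)%nat; auto. lia. Qed.

Lemma pc_close m c c' a : 0 <= a -> (forall i, (1 <= i)%nat -> (i < m)%nat -> Cnorm (Csub (c i) (c' i)) < a) ->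
  forall i, (i <= m)%nat -> Cnorm (Csub (pc m c i) (pc m c' i)) <= a.
Proof.
  intros ha h i hi. unfold pc. destruct (Nat.eqb i 0) eqn:E0.
  rewrite Cnorm_sub_self; lra.
  destruct (Nat.eqb i m) eqn:Em. rewrite Cnorm_sub_self; lra.
  apply Nat.eqb_neq in E0, Em. apply Rlt_le, h; lia.
Qed.

Lemma dc_close m c c' a : (1 <= m)%nat -> 0 <= a -> (forall i, (1 <= i)%nat -> (i < m)%nat -> Cnorm (Csub (c i) (c' i)) < a) ->
  forall i, (i <= m - 1)%nat -> Cnorm (Csub (dc m c i) (dc m c' i)) <= INR m * a.
Proof.
  intros hm ha h i hi. unfold dc. destruct (Nat.eqb (S i) m) eqn:E.
  rewrite Cnorm_sub_self. pose proof (pos_INR m). nra.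
  apply Nat.eqb_neq in E.
  replace (Csub (Cmul (CofR (INR (S i))) (c (S i))) (Cmul (CofR (INR (S i))) (c' (S i)))) with
    (Cmul (CofR (INR (S i))) (Csub (c (S i)) (c' (S i)))) by Ceq.
  rewrite Cnorm_mul, Cnorm_CofR, Rabs_right by (apply Rle_ge, pos_INR).
  assert (INR (S i) <= INR m) by (apply le_INR; lia).
  assert (Cnorm (Csub (c (S i)) (c' (S i))) < a) by (apply h; lia).
  pose proof (pos_INR (S i)). pose proof (Cnorm_ge0 (Csub (c (S i)) (c' (S i)))). nra.
Qed.

Lemma pc_bound m c M : 1 <= M -> (forall i, (1 <= i)%nat -> (i < m)%nat -> Cnorm (c i) <= M) ->
  forall i, (i <= m)%nat -> Cnorm (pc m c i) <= M.
Proof.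
  intros hM h i hi. unfold pc. destruct (Nat.eqb i 0) eqn:E0. rewrite Cnorm_C0; lra.
  destruct (Nat.eqb i m) eqn:Em. rewrite Cnorm_C1; lra.
  apply Nat.eqb_neq in E0, Em. apply h; lia.
Qed.

Lemma coefa_bound d e q M : (1 <= e)%nat -> (forall i, (i < d + e - 2)%nat -> Cnorm (q i) <= M) ->
  forall i, (1 <= i)%nat -> (i < d)%nat -> Cnorm (coef_a d q i) <= M.
Proof. intros he h i h1 h2. unfold coef_a. apply h; lia. Qed.

Lemma coefb_bound d e q M : (1 <= d)%nat -> (forall i, (i < d + e - 2)%nat -> Cnorm (q i) <= M) ->
  forall i, (1 <= i)%nat -> (i < e)%nat -> Cnorm (coef_b d e q i) <= M.
Proof. intros hd h i h1 h2. unfold coef_b. apply h; lia. Qed.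

Lemma list_uniform_N {A} (P : A -> nat -> Prop) (l : list A) :
  (forall a N N', (N <= N')%nat -> P a N -> P a N') ->
  (forall a, In a l -> exists N, P a N) -> exists N, forall a, In a l -> P a N.
Proof.
  intros hmono. induction l as [|x l IH]; intros h.
  - exists O; intros a [].
  - destruct (h x (or_introl eq_refl)) as [N1 h1].
    destruct IH as [N2 h2]. intros a ha; apply h; right; auto.
    exists (Nat.max N1 N2). intros a [<-|ha].
    + apply hmono with N1; auto; lia.
    + apply hmono with N2; auto; lia.
Qed.

Lemma list_uniform_R {A} (P : A -> R -> Prop) (l : list A) :
  (forall a x y, 0 < x -> x <= y -> P a y -> P a x) ->
  (forall a, In a l -> exists x, 0 < x /\ P a x) -> exists x, 0 < x /\ forall a, In a l -> P a x.
Proof.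
  intros hmono. induction l as [|y l IH]; intros h.
  - exists 1; split; [lra|intros a []].
  - destruct (h y (or_introl eq_refl)) as [x1 [hx1 h1]].
    destruct IH as [x2 [hx2 h2]]. intros a ha; apply h; right; auto.
    exists (Rmin x1 x2). split. apply Rmin_glb_lt; auto. intros a [<-|ha].
    + apply hmono with x1; auto. apply Rmin_glb_lt; auto. apply Rmin_l.
    + apply hmono with x2; auto. apply Rmin_glb_lt; auto. apply Rmin_r.
Qed.

Fixpoint FP (d e : nat) (p : nat -> C) (R0 : R) (a : C) (N : nat) : Prop :=
  match N with
  | O => Cnorm a <= R0
  | S N => Cnorm a <= R0 /\ exists y, in_corr d e p a y /\ FP d e p R0 y N
  end.

Lemma FP_bound d e p R0 a N : FP d e p R0 a N -> Cnorm a <= R0.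
Proof. destruct N; simpl; tauto. Qed.

Lemma FP_S d e p R0 N : forall a, FP d e p R0 a (S N) -> FP d e p R0 a N.
Proof.
  induction N; intros a h; simpl in *. tauto.
  destruct h as [h1 [y [hy h2]]]. split; auto. exists y; split; auto.
Qed.

Lemma FP_mono d e p R0 a N N' : (N <= N')%nat -> FP d e p R0 a N' -> FP d e p R0 a N.
Proof. intros h. induction h; auto. intro; apply IHh, FP_S; auto. Qed.

Definition sc d e p a := setc0 (gc d e p) (Copp (fpol d p a)).

Lemma sc_lead d e p a : (1 <= e)%nat -> sc d e p a e = C1.
Proof.
  intro. unfold sc, setc0, gc. destruct (Nat.eqb e 0) eqn:E. apply Nat.eqb_eq in E; lia.
  apply pc_m; auto.
Qed.

Lemma sc_fp d e p a y : (1 <= e)%nat ->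
  fp e (sc d e p a) y = Csub (gpol d e p y) (fpol d p a).
Proof.
  intro. unfold sc. rewrite fp_setc0, gpol_fp by auto. unfold gc at 2. rewrite pc_0. Ceq.
Qed.

Lemma in_corr_sc d e p a y : (1 <= e)%nat -> in_corr d e p a y <-> fp e (sc d e p a) y = C0.
Proof.
  intro he. rewrite sc_fp by auto. unfold in_corr. split; intro h.
  rewrite h. Ceq. destruct (gpol d e p y) as [u v], (fpol d p a) as [u' v'].
  unfold Csub, C0 in h. injection h; intros. f_equal; lra.
Qed.

Lemma C1_neq0 : C1 <> C0. Proof. unfold C1, C0. intro h; injection h; lra. Qed.

Lemma esc_gen d e p s t x y : (1 <= e)%nat -> (e < d)%nat -> 1 <= s -> 1 <= t ->
  (forall k, (1 <= k)%nat -> (k < d)%nat -> Cnorm (coef_a d p k) <= s ^ (d - k)) ->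
  (forall k, (1 <= k)%nat -> (k < e)%nat -> Cnorm (coef_b d e p k) <= t ^ (e - k)) ->
  2 * INR d * s <= Cnorm x -> 2 * INR (S e) * 2 ^ e < Cnorm x -> 2 * INR (S e) * t ^ e < Cnorm x ^ d ->
  in_corr d e p x y -> 2 * Cnorm x <= Cnorm y.
Proof.
  intros he hd hs ht ha hb hx1 hx2 hx3 hxy.
  destruct (Rle_dec (2 * Cnorm x) (Cnorm y)) as [ok|hy]; auto. exfalso.
  pose proof (poly_lower d (coef_a d p) s x ltac:(lia) hs ha hx1) as hl.
  pose proof (poly_upper e (coef_b d e p) t y he ht hb) as hu.
  unfold in_corr, fpol, gpol in hxy. rewrite hxy in hu.
  assert (hxpos : 1 <= Cnorm x).
  { assert (1 <= INR (S e)) by (apply (le_INR 1); lia). assert (1 <= 2 ^ e) by (apply pow_R1_Rle; lra). nra. }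
  pose proof (Cnorm_ge0 y).
  assert (hS : 0 < INR (S e)) by (apply lt_0_INR; lia).
  assert (hxe : Cnorm x ^ e * Cnorm x <= Cnorm x ^ d).
  { replace d with (e + (d - e))%nat by lia. rewrite pow_add. apply Rmult_le_compat_l.
    apply pow_le; lra. replace (d - e)%nat with (S (d - e - 1)) by lia. simpl.
    rewrite <- (Rmult_1_r (Cnorm x)) at 1. apply Rmult_le_compat_l. lra. apply pow_R1_Rle; lra. }
  unfold Rmax in hu. destruct (Rle_dec (Cnorm y) t).
  - assert (INR (S e) * t ^ e < Cnorm x ^ d / 2) by lra. lra.
  - assert (hye : Cnorm y ^ e <= (2 * Cnorm x) ^ e) by (apply pow_incr; lra).
    rewrite Rpow_mult_distr in hye.
    assert (hpe : 0 < Cnorm x ^ e) by (apply pow_lt; lra).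
    assert (h2e : 0 < 2 ^ e) by (apply pow_lt; lra).
    assert (INR (S e) * (2 ^ e * Cnorm x ^ e) < Cnorm x ^ d / 2).
    { assert (INR (S e) * (2 ^ e * Cnorm x ^ e) * 2 < Cnorm x ^ e * Cnorm x).
      { replace (INR (S e) * (2 ^ e * Cnorm x ^ e) * 2) with (Cnorm x ^ e * (2 * INR (S e) * 2 ^ e)) by ring.
        apply Rmult_lt_compat_l; auto. }
      lra. }
    assert (INR (S e) * Cnorm y ^ e <= INR (S e) * (2 ^ e * Cnorm x ^ e)) by (apply Rmult_le_compat_l; lra).
    lra.
Qed.

Lemma esc_M d e M : (1 <= e)%nat -> (e < d)%nat -> 0 <= M -> exists R0, 0 < R0 /\
  forall p, (forall i, (i < d + e - 2)%nat -> Cnorm (p i) <= M) ->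
  forall x y, R0 < Cnorm x -> in_corr d e p x y -> Cnorm x + 1 <= Cnorm y.
Proof.
  intros he hd hM. set (s := Rmax 1 M).
  assert (hs : 1 <= s) by apply Rmax_l. assert (hMs : M <= s) by apply Rmax_r.
  assert (h1 : 0 <= 2 * INR d * s) by (pose proof (pos_INR d); nra).
  assert (h2 : 0 <= 2 * INR (S e) * 2 ^ e) by (pose proof (pos_INR (S e)); pose proof (pow_le 2 e); nra).
  assert (h3 : 0 <= 2 * INR (S e) * s ^ e) by (pose proof (pos_INR (S e)); pose proof (pow_le s e); nra).
  exists (2 * INR d * s + 2 * INR (S e) * 2 ^ e + 2 * INR (S e) * s ^ e + 1). split. lra.
  intros p hp x y hx hxy.
  assert (hpow : forall k m, (1 <= k)%nat -> (k < m)%nat -> M <= s ^ (m - k)).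
  { intros k m h1' h2'. apply Rle_trans with s; auto. replace (m - k)%nat with (S (m - k - 1)) by lia.
    simpl. rewrite <- (Rmult_1_r s) at 1. apply Rmult_le_compat_l. lra. apply pow_R1_Rle; lra. }
  assert (hxd : Cnorm x <= Cnorm x ^ d).
  { replace d with (S (d - 1)) by lia. simpl. rewrite <- (Rmult_1_r (Cnorm x)) at 1.
    apply Rmult_le_compat_l. pose proof (Cnorm_ge0 x); lra. apply pow_R1_Rle; lra. }
  pose proof (esc_gen d e p s s x y he hd hs hs) as hE.
  assert (2 * Cnorm x <= Cnorm y).
  { apply hE; auto; try lra.
    - intros k hk1 hk2. eapply Rle_trans. apply coefa_bound with e; auto. apply hpow; auto.
    - intros k hk1 hk2. eapply Rle_trans. apply coefb_bound; auto. lia. apply hpow; auto. }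
  lra.
Qed.

Lemma escape_path d e p R0 x : (forall u v, R0 < Cnorm u -> in_corr d e p u v -> Cnorm u + 1 <= Cnorm v) ->
  (forall k, in_corr d e p (x k) (x (S k))) -> bounded_seq x -> forall k, Cnorm (x k) <= R0.
Proof.
  intros hesc hp [B hB] k. destruct (Rle_dec (Cnorm (x k)) R0) as [ok|hk]; auto. exfalso.
  assert (hj : forall j, Cnorm (x k) + INR j <= Cnorm (x (k + j)%nat)).
  { induction j. rewrite Nat.add_0_r; simpl; lra.
    replace (k + S j)%nat with (S (k + j)) by lia. rewrite S_INR.
    assert (R0 < Cnorm (x (k + j)%nat)) by (pose proof (pos_INR j); lra).
    pose proof (hesc _ _ H (hp (k + j)%nat)). lra. }
  destruct (INR_unbounded (B - Cnorm (x k))) as [j hjB].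
  pose proof (hj j). pose proof (hB (k + j)%nat). lra.
Qed.

Lemma path_FP d e p R0 x : (forall k, in_corr d e p (x k) (x (S k))) -> (forall k, Cnorm (x k) <= R0) ->
  forall N k, FP d e p R0 (x k) N.
Proof.
  intros hp hb N. induction N; intros k; simpl. auto.
  split; auto. exists (x (S k)). split; auto.
Qed.

Lemma konig_step d e p R0 a : (1 <= e)%nat -> (forall N, FP d e p R0 a N) ->
  exists y, in_corr d e p a y /\ forall N, FP d e p R0 y N.
Proof.
  intros he hG.
  destruct (roots_list e (sc d e p a)) as [rs [hr1 hr2]].
  { rewrite sc_lead by auto. apply C1_neq0. }
  apply NNPP. intro hno.
  assert (hall : forall r, In r rs -> exists N, ~ FP d e p R0 r N).
  { intros r hr. apply NNPP. intro hn. apply hno. exists r. split.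
    apply in_corr_sc; auto. intro N. apply NNPP. intro hf. apply hn. exists N; auto. }
  destruct (list_uniform_N (fun r N => ~ FP d e p R0 r N) rs) as [N hN].
  { intros r N N' hle hn hf. apply hn. apply FP_mono with N'; auto. }
  exact hall.
  destruct (hG (S N)) as [_ [y [hy hfy]]].
  apply (hN y). apply hr2. apply in_corr_sc; auto. auto.
Qed.

Lemma konig d e p R0 a : (1 <= e)%nat -> (forall N, FP d e p R0 a N) ->
  exists x, is_path d e p a x /\ bounded_seq x.
Proof.
  intros he hG.
  set (G := fun z => forall N, FP d e p R0 z N).
  set (nx := fun z => epsilon (inhabits C0) (fun y => in_corr d e p z y /\ G y)).
  assert (hnx : forall z, G z -> in_corr d e p z (nx z) /\ G (nx z)).
  { intros z hz. unfold nx. apply (epsilon_spec (inhabits C0) (fun y => in_corr d e p z y /\ G y)).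
    apply konig_step; auto. }
  set (x := fix x (k : nat) : C := match k with O => a | S k => nx (x k) end).
  assert (hx : forall k, G (x k)).
  { induction k; simpl. exact hG. apply hnx; auto. }
  exists x. split.
  - split. reflexivity. intro k. simpl. apply hnx; auto.
  - exists R0. intro k. apply (FP_bound d e p R0 (x k) O). apply hx.
Qed.

Section Closed.
Variables (d e : nat).
Hypothesis he : (1 <= e)%nat.
Hypothesis hde : (e < d)%nat.
Notation n := (d + e - 2)%nat.

Lemma fp_lip_q m cq cp x x' r M delta : 1 <= r -> Cnorm x <= r -> Cnorm x' <= r -> 0 <= delta ->
  (forall i, (i <= m)%nat -> Cnorm (Csub (cp i) (cq i)) <= delta) ->
  (forall i, (i <= m)%nat -> Cnorm (cq i) <= M) -> 0 <= M ->
  Cnorm (Csub x x') <= delta ->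
  Cnorm (Csub (fp m cp x) (fp m cq x')) <= INR (S m) * r ^ m * (1 + M * INR m) * delta.
Proof.
  intros hr hx hx' hdel hc hM hM0 hxx.
  pose proof (fp_lip m cp cq x x' r M delta hr hx hx' hc hM).
  assert (0 <= INR (S m) * r ^ m) by (apply Rmult_le_pos; [apply pos_INR | apply pow_le; lra]).
  assert (M * INR m * Cnorm (Csub x x') <= M * INR m * delta).
  { apply Rmult_le_compat_l; auto. apply Rmult_le_pos; auto. apply pos_INR. }
  eapply Rle_trans. exact H.
  replace (INR (S m) * r ^ m * (1 + M * INR m) * delta) with (INR (S m) * r ^ m * (delta + M * INR m * delta)) by ring.
  apply Rmult_le_compat_l; auto. lra.
Qed.

Lemma FP_open q Mq R0 : 1 <= Mq -> 0 < R0 -> (forall i, (i < n)%nat -> Cnorm (q i) <= Mq) ->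
  forall N a, ~ FP d e q R0 a N -> exists del, 0 < del /\
    forall p a', dist_n n q p del -> Cnorm (Csub a' a) < del -> ~ FP d e p R0 a' N.
Proof.
  intros hMq hR hq. induction N as [|N IH]; intros a hna.
  - simpl in hna. apply Rnot_le_lt in hna. exists (Cnorm a - R0). split. lra.
    intros p a' hd ha' hf. simpl in hf. pose proof (Cnorm_rev a a'). rewrite Cnorm_sub_sym in ha'. lra.
  - destruct (Rle_dec (Cnorm a) R0) as [haR|haR].
    2:{ apply Rnot_le_lt in haR. exists (Cnorm a - R0). split. lra.
        intros p a' hd ha' hf. apply FP_bound in hf. pose proof (Cnorm_rev a a'). rewrite Cnorm_sub_sym in ha'. lra. }
    destruct (roots_list e (sc d e q a)) as [rs [hr1 hr2]].
    { rewrite sc_lead by auto. apply C1_neq0. }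
    destruct (list_uniform_R (fun r del => forall p a', dist_n n q p del -> Cnorm (Csub a' r) < del -> ~ FP d e p R0 a' N) rs)
      as [d1 [hd1 hd1']].
    { intros r x y hx hxy h p a' hd ha'. apply h. apply dist_mono with x; auto. lra. }
    { intros r hr. apply IH. intro hf. apply hna. simpl. split; auto. exists r. split; auto.
      apply in_corr_sc; auto. }
    set (r := R0 + 1).
    assert (hr1' : 1 <= r) by (unfold r; lra).
    set (K := INR (S e) * r ^ e * (1 + Mq * INR e) + INR (S d) * r ^ d * (1 + Mq * INR d)).
    assert (hK : 0 < K).
    { unfold K. assert (0 < INR (S e)) by (apply lt_0_INR; lia). assert (0 < INR (S d)) by (apply lt_0_INR; lia).
      assert (0 < r ^ e) by (apply pow_lt; lra). assert (0 < r ^ d) by (apply pow_lt; lra).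
      assert (0 <= Mq * INR e) by (apply Rmult_le_pos; [lra|apply pos_INR]).
      assert (0 <= Mq * INR d) by (apply Rmult_le_pos; [lra|apply pos_INR]).
      assert (0 < INR (S e) * r ^ e * (1 + Mq * INR e)) by (repeat apply Rmult_lt_0_compat; lra).
      assert (0 < INR (S d) * r ^ d * (1 + Mq * INR d)) by (repeat apply Rmult_lt_0_compat; lra). lra. }
    assert (hd1e : 0 < d1 ^ e) by (apply pow_lt; lra).
    set (eta := Rmin 1 (Rmin d1 (d1 ^ e / (2 * K)))).
    assert (heta : 0 < eta).
    { unfold eta. repeat apply Rmin_glb_lt; try lra. apply Rdiv_lt_0_compat; lra. }
    assert (heta1 : eta <= 1) by apply Rmin_l.
    assert (heta2 : eta <= d1) by (eapply Rle_trans; [apply Rmin_r|apply Rmin_l]).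
    assert (heta3 : eta <= d1 ^ e / (2 * K)) by (eapply Rle_trans; [apply Rmin_r|apply Rmin_r]).
    exists eta. split; auto.
    intros p a' hd ha' hf. simpl in hf. destruct hf as [ha'R [y [hy hfy]]].
    assert (hyR : Cnorm y <= R0) by (eapply FP_bound; eauto).
    assert (hcf : forall i, (i <= d)%nat -> Cnorm (Csub (fc d p i) (fc d q i)) <= eta).
    { apply pc_close. lra. intros i h1 h2. apply coefa_close with e; auto. }
    assert (hcg : forall i, (i <= e)%nat -> Cnorm (Csub (gc d e p i) (gc d e q i)) <= eta).
    { apply pc_close. lra. intros i h1 h2. apply coefb_close; auto. lia. }
    assert (hbf : forall i, (i <= d)%nat -> Cnorm (fc d q i) <= Mq).
    { apply pc_bound; auto. intros i h1 h2. apply coefa_bound with e; auto. }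
    assert (hbg : forall i, (i <= e)%nat -> Cnorm (gc d e q i) <= Mq).
    { apply pc_bound; auto. intros i h1 h2. apply coefb_bound; auto. lia. }
    assert (haa : Cnorm a' <= r).
    { pose proof (Cnorm_rev a' a). unfold r. lra. }
    assert (hg : Cnorm (Csub (fp e (gc d e p) y) (fp e (gc d e q) y)) <= INR (S e) * r ^ e * (1 + Mq * INR e) * eta).
    { apply fp_lip_q; auto; try (unfold r; lra). rewrite Cnorm_sub_self; lra. }
    assert (hfl : Cnorm (Csub (fp d (fc d p) a') (fp d (fc d q) a)) <= INR (S d) * r ^ d * (1 + Mq * INR d) * eta).
    { apply fp_lip_q; auto; try (unfold r; lra). }
    rewrite <- gpol_fp in hg by auto. rewrite <- gpol_fp in hg by auto.
    rewrite <- fpol_fp in hfl by lia. rewrite <- fpol_fp in hfl by lia.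
    assert (hsm : Cnorm (fp e (sc d e q a) y) < Cnorm (sc d e q a e) * d1 ^ e).
    { rewrite sc_lead, Cnorm_C1, Rmult_1_l by auto. rewrite sc_fp by auto.
      unfold in_corr in hy.
      replace (Csub (gpol d e q y) (fpol d q a)) with
        (Cadd (Csub (fpol d p a') (fpol d q a)) (Csub (gpol d e q y) (gpol d e p y))).
      2:{ rewrite hy. Ceq. }
      eapply Rle_lt_trans. apply Cnorm_add. rewrite (Cnorm_sub_sym (gpol d e q y)).
      assert (K * eta <= d1 ^ e / 2).
      { apply Rle_trans with (K * (d1 ^ e / (2 * K))). apply Rmult_le_compat_l; lra.
        right; field; lra. }
      unfold K in H. lra. }
    destruct (root_near e (sc d e q a) y d1) as [r0 [hr0 hyr0]]; auto.
    { rewrite sc_lead by auto. apply C1_neq0. }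
    apply (hd1' r0 (hr2 r0 hr0) p y); auto.
    apply dist_mono with eta; auto.
Qed.
End Closed.

Lemma INR_neq0 m : (1 <= m)%nat -> CofR (INR m) <> C0.
Proof. intros hm h. unfold CofR, C0 in h. injection h. intros. assert (0 < INR m) by (apply lt_0_INR; lia). lra. Qed.

Lemma dc_lead m c : (1 <= m)%nat -> dc m c (m - 1) = CofR (INR m).
Proof. intro. unfold dc. replace (S (m - 1)) with m by lia. rewrite Nat.eqb_refl; auto. Qed.


Section Closed2.
Variables (d e : nat).
Hypothesis he : (1 <= e)%nat.
Hypothesis hde : (e < d)%nat.
Notation n := (d + e - 2)%nat.

Lemma dpoly1_neq0 c b : dpoly 1 c b <> C0.
Proof. unfold dpoly; simpl. unfold Cmul, CofR, C1, C0; simpl. intro h; injection h; intros; lra. Qed.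

Lemma crit_cont q a : critical_point d e q a -> forall eps, 0 < eps ->
  exists del, 0 < del /\ forall p, dist_n n q p del ->
    exists a', critical_point d e p a' /\ Cnorm (Csub a' a) < eps.
Proof.
  intros hc eps heps.
  destruct (fin_bound_lt (fun i => Cnorm (q i)) n) as [Mq0 [hMq0 hq]].
  set (Mq := Mq0 + 1). assert (hMq : 1 <= Mq) by (unfold Mq; lra).
  assert (hq' : forall i, (i < n)%nat -> Cnorm (q i) <= Mq) by (intros; unfold Mq; pose proof (hq i H); lra).
  destruct hc as [hc|[b [hb1 hb2]]].
  - rewrite dfpol_fp in hc by lia.
    destruct (rc (d - 1) (dc d (coef_a d q)) a) with (e := eps) as [eta [heta h]]; auto.
    { rewrite dc_lead by lia. apply INR_neq0; lia. }
    assert (hd0 : 0 < INR d) by (apply lt_0_INR; lia).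
    exists (eta / INR d). split. apply Rdiv_lt_0_compat; auto.
    intros p hp. destruct (h (dc d (coef_a d p))) as [r [hr1 hr2]].
    { rewrite !dc_lead by lia. auto. }
    { intros i hi. apply Rle_trans with (INR d * (eta / INR d)).
      apply dc_close. lia. apply Rlt_le, Rdiv_lt_0_compat; auto.
      intros j h1 h2. apply coefa_close with e; auto. auto. right; field; lra. }
    exists r. split. left. rewrite dfpol_fp by lia. auto. rewrite Cnorm_sub_sym; auto.
  - destruct (Nat.eq_dec e 1) as [e1|e1].
    { exfalso. unfold dgpol in hb1. rewrite e1 in hb1. apply (dpoly1_neq0 _ _ hb1). }
    set (c0 := setc0 (fc d q) (Copp (gpol d e q b))).
    assert (hc0 : fp d c0 a = C0).
    { unfold c0. rewrite fp_setc0. rewrite <- fpol_fp by lia. unfold fc. rewrite pc_0. rewrite hb2. Ceq. }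
    assert (hc0d : c0 d = C1).
    { unfold c0, setc0. destruct (Nat.eqb d 0) eqn:E. apply Nat.eqb_eq in E; lia. unfold fc. apply pc_m; lia. }
    destruct (rc d c0 a) with (e := eps) as [eta2 [heta2 h2]]; auto.
    { rewrite hc0d. apply C1_neq0. }
    set (rb := Cnorm b + 1).
    assert (hrb : 1 <= rb) by (unfold rb; pose proof (Cnorm_ge0 b); lra).
    set (L := INR (S e) * rb ^ e * (1 + Mq * INR e)).
    assert (hL : 0 < L).
    { unfold L. assert (0 < INR (S e)) by (apply lt_0_INR; lia). assert (0 < rb ^ e) by (apply pow_lt; lra).
      assert (0 <= Mq * INR e) by (apply Rmult_le_pos; [lra|apply pos_INR]).
      repeat apply Rmult_lt_0_compat; lra. }
    set (etab := Rmin 1 (Rmin eta2 (eta2 / L))).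
    assert (hetab : 0 < etab) by (unfold etab; repeat apply Rmin_glb_lt; try lra; apply Rdiv_lt_0_compat; lra).
    assert (hetab1 : etab <= 1) by apply Rmin_l.
    assert (hetab2 : etab <= eta2) by (eapply Rle_trans; [apply Rmin_r|apply Rmin_l]).
    assert (hetab3 : etab <= eta2 / L) by (eapply Rle_trans; [apply Rmin_r|apply Rmin_r]).
    rewrite dgpol_fp in hb1 by lia.
    destruct (rc (e - 1) (dc e (coef_b d e q)) b) with (e := etab) as [eta1 [heta1 h1]]; auto.
    { rewrite dc_lead by lia. apply INR_neq0; lia. }
    assert (he0 : 0 < INR e) by (apply lt_0_INR; lia).
    exists (Rmin (eta1 / INR e) etab). split.
    { apply Rmin_glb_lt; auto. apply Rdiv_lt_0_compat; auto. }
    intros p hp.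
    set (del := Rmin (eta1 / INR e) etab) in *.
    assert (hdel1 : del <= eta1 / INR e) by apply Rmin_l.
    assert (hdel2 : del <= etab) by apply Rmin_r.
    assert (hdel0 : 0 < del) by (apply Rmin_glb_lt; auto; apply Rdiv_lt_0_compat; auto).
    destruct (h1 (dc e (coef_b d e p))) as [b' [hb'1 hb'2]].
    { rewrite !dc_lead by lia. auto. }
    { intros i hi. apply Rle_trans with (INR e * del).
      apply dc_close. lia. lra.
      intros j h1' h2'. apply coefb_close; auto. lia. auto.
      apply Rle_trans with (INR e * (eta1 / INR e)). apply Rmult_le_compat_l; lra. right; field; lra. }
    assert (hbb : Cnorm (Csub b' b) < etab) by (rewrite Cnorm_sub_sym; auto).
    assert (hbf : forall i, (i <= d)%nat -> Cnorm (Csub (fc d p i) (fc d q i)) <= del).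
    { apply pc_close. lra. intros i h1' h2'. apply coefa_close with e; auto. }
    assert (hcg : forall i, (i <= e)%nat -> Cnorm (Csub (gc d e p i) (gc d e q i)) <= etab).
    { intros i hi. apply Rle_trans with del; auto. apply pc_close. lra. intros j h1' h2'. apply coefb_close; auto. lia. auto. }
    assert (hbg : forall i, (i <= e)%nat -> Cnorm (gc d e q i) <= Mq).
    { apply pc_bound; auto. intros i h1' h2'. apply coefb_bound; auto. lia. }
    assert (hgg : Cnorm (Csub (gpol d e p b') (gpol d e q b)) <= eta2).
    { rewrite !gpol_fp by lia.
      eapply Rle_trans. apply fp_lip_q with (r := rb) (M := Mq) (delta := etab); auto; try lra.
      pose proof (Cnorm_rev b' b). unfold rb. lra. unfold rb; lra.
      fold L. apply Rle_trans with (L * (eta2 / L)). apply Rmult_le_compat_l; lra. right; field; lra. }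
    destruct (h2 (setc0 (fc d p) (Copp (gpol d e p b')))) as [r [hr1 hr2]].
    { rewrite hc0d. unfold setc0. destruct (Nat.eqb d 0) eqn:E. apply Nat.eqb_eq in E; lia. unfold fc. apply pc_m; lia. }
    { intros i hi. unfold c0, setc0. destruct (Nat.eqb i 0).
      - replace (Csub (Copp (gpol d e p b')) (Copp (gpol d e q b))) with (Csub (gpol d e q b) (gpol d e p b')) by Ceq.
        rewrite Cnorm_sub_sym. auto.
      - apply Rle_trans with del; auto. lra. }
    exists r. split.
    + right. exists b'. split. rewrite dgpol_fp by lia. auto.
      rewrite fp_setc0 in hr1. rewrite <- fpol_fp in hr1 by lia. unfold fc in hr1. rewrite pc_0 in hr1.
      destruct (gpol d e p b') as [u v], (fpol d p r) as [u' v']. unfold Cadd, Csub, Copp, C0 in hr1; simpl in hr1.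
      injection hr1; intros. f_equal; lra.
    + rewrite Cnorm_sub_sym; auto.
Qed.
End Closed2.

Lemma S_closed d e : (1 <= e)%nat -> (e < d)%nat -> forall q, ~ S_de d e q ->
  exists del, 0 < del /\ forall p, dist_n (d + e - 2) q p del -> ~ S_de d e p.
Proof.
  intros he hde q hq. unfold S_de in hq.
  apply not_all_ex_not in hq. destruct hq as [a ha]. apply imply_to_and in ha. destruct ha as [hca hna].
  destruct (fin_bound_lt (fun i => Cnorm (q i)) (d + e - 2)) as [Mq0 [hMq0 hq]].
  set (Mq := Mq0 + 1). assert (hMq : 1 <= Mq) by (unfold Mq; lra).
  assert (hq' : forall i, (i < d + e - 2)%nat -> Cnorm (q i) <= Mq) by (intros; unfold Mq; pose proof (hq i H); lra).
  destruct (esc_M d e (Mq + 1) he hde ltac:(lra)) as [R0 [hR0 hesc]].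
  assert (hN : exists N, ~ FP d e q R0 a N).
  { apply NNPP. intro hall. apply hna. apply konig with R0; auto. intro N. apply NNPP. intro hf. apply hall. exists N; auto. }
  destruct hN as [N hN].
  destruct (FP_open d e he hde q Mq R0 hMq hR0 hq' N a hN) as [d1 [hd1 hd1']].
  destruct (crit_cont d e he hde q a hca d1 hd1) as [d2 [hd2 hd2']].
  exists (Rmin 1 (Rmin d1 d2)). split. repeat apply Rmin_glb_lt; lra.
  intros p hp hSp.
  assert (hm1 : Rmin 1 (Rmin d1 d2) <= 1) by apply Rmin_l.
  assert (hm2 : Rmin 1 (Rmin d1 d2) <= d1) by (eapply Rle_trans; [apply Rmin_r|apply Rmin_l]).
  assert (hm3 : Rmin 1 (Rmin d1 d2) <= d2) by (eapply Rle_trans; [apply Rmin_r|apply Rmin_r]).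
  destruct (hd2' p (dist_mono _ _ _ _ _ hp hm3)) as [a' [hca' ha']].
  destruct (hSp a' hca') as [x [[hx0 hxp] hxb]].
  assert (hpM : forall i, (i < d + e - 2)%nat -> Cnorm (p i) <= Mq + 1).
  { intros i hi. pose proof (hp i hi). change (Cnorm (Csub (q i) (p i)) < Rmin 1 (Rmin d1 d2)) in H.
    pose proof (Cnorm_rev (p i) (q i)). rewrite Cnorm_sub_sym in H. pose proof (hq' i hi). lra. }
  assert (hxR : forall k, Cnorm (x k) <= R0).
  { apply escape_path with d e p; auto. apply hesc; auto. }
  pose proof (path_FP d e p R0 x hxp hxR N 0%nat) as hF. rewrite hx0 in hF.
  apply (hd1' p a'); auto. apply dist_mono with (Rmin 1 (Rmin d1 d2)); auto.
Qed.

Module HBT.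
Import HB.structures all_boot all_order all_algebra all_classical all_reals all_analysis Rstruct Rstruct_topology finmap.
Import Order.TTheory GRing.Theory Num.Theory.
Local Open Scope ring_scope.
Local Open Scope classical_set_scope.

Section S.
Variable n : nat.

Definition psiv (v : 'rV[R]_(n + n)) (i : nat) : Defs.C :=
  match @insub _ (fun k => (k < n)%N) 'I_n i with
  | Some j => (v ord0 (lshift n j), v ord0 (rshift n j))
  | None => C0 end.

Definition phiv (p : nat -> Defs.C) : 'rV[R]_(n + n) :=
  \row_(j < n + n) match fintype.split j with inl a => fst (p a) | inr b => snd (p b) end.

Lemma psiv_phiv p i : (i < n)%N -> psiv (phiv p) i = p i.
Proof.
  move=> hi. rewrite /psiv insubT /= !mxE.
  rewrite (unsplitK (inl _)) (unsplitK (inr _)) /=. by case: (p i).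
Qed.

Lemma In_mem (T : eqType) (s : seq T) x : x \in s -> List.In x s.
Proof.
  elim: s => [|a s IH] //=. rewrite inE => /orP [/eqP ->|h]. by left. right; exact: IH.
Qed.

Lemma psiv_lip (v w : 'rV[R]_(n + n)) (e : R) : (forall j, `|v ord0 j - w ord0 j| < e) ->
  forall i, (i < n)%N -> Rlt (Cnorm (Csub (psiv v i) (psiv w i))) (e + e).
Proof.
  move=> h i hi. rewrite /psiv insubT /=.
  eapply Rle_lt_trans. apply: Cnorm_le_abs. rewrite /Csub /=.
  apply: Rplus_lt_compat; apply/RltP; exact: h.
Qed.

Lemma normR_abs (x : R) : `|x| = Rabs x. Proof. by []. Qed.

Lemma entry_bound (v : 'rV[R]_(n + n)) (M : R) : (forall i, (i < n)%N -> Rle (Cnorm (psiv v i)) M) ->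
  forall j, `|v ord0 j| <= M.
Proof.
  move=> h j. rewrite -(splitK j). case: (fintype.split j) => [a|b] /=; apply/RleP; rewrite normR_abs.
  - have := h a (ltn_ord a). rewrite /psiv (insubT (fun k => (k < n)%N) (ltn_ord a)) /= => hb.
    have e : Sub (nat_of_ord a) (ltn_ord a) = a :> 'I_n by apply: val_inj.
    rewrite e in hb. exact: (Rle_trans _ _ _ (Rabs_fst_le (_, _)) hb).
  - have := h b (ltn_ord b). rewrite /psiv (insubT (fun k => (k < n)%N) (ltn_ord b)) /= => hb.
    have e : Sub (nat_of_ord b) (ltn_ord b) = b :> 'I_n by apply: val_inj.
    rewrite e in hb. exact: (Rle_trans _ _ _ (Rabs_snd_le (_, _)) hb).
Qed.

End S.

Lemma HB_compact (n : nat) (K : (nat -> Defs.C) -> Prop) :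
  (exists M, forall p, K p -> forall i, lt i n -> Rle (Cnorm (p i)) M) ->
  (forall q, ~ K q -> exists d, Rlt 0 d /\ forall p, dist_n n q p d -> ~ K p) ->
  compact_n n K.
Proof.
  move=> [M hM] hcl I U hUo hcov.
  have inv : forall p q, (forall i, lt i n -> p i = q i) -> K p -> K q.
  { move=> p q hpq hp. apply: Classical_Prop.NNPP => hq. have [d [hd hd']] := hcl q hq.
    apply: (hd' p) hp => i hi. change (Rlt (Cnorm (Csub (q i) (p i))) d).
    by rewrite (hpq i hi) Cnorm_sub_self. }
  have Uinv : forall j p q, (forall i, lt i n -> p i = q i) -> U j p -> U j q.
  { move=> j p q hpq hp. have [r [hr hr']] := hUo j p hp. apply: hr' => i hi.
    change (Rlt (Cnorm (Csub (p i) (q i))) r). by rewrite (hpq i hi) Cnorm_sub_self. }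
  case: (Classical_Prop.classic (exists p, K p)) => [[p0 hp0]|hne]; last first.
  { exists nil => p hp; exfalso; apply: hne; by exists p. }
  have [i0 _] := hcov p0 hp0.
  pose A := [set v : 'rV[R]_(n + n) | K (psiv n v)].
  have hb : bounded_set A.
  { rewrite /=. exists (Rabs M); split; first exact: num_real.
    move=> x hx v hv. change (mx_norm v <= x). rewrite mx_normrE.
    have hM0 : Rle 0 (Rabs M) by apply: Rabs_pos.
    have hMM : Rle M (Rabs M) by apply: Rle_abs.
    have hx' : Rlt (Rabs M) x by apply/RltP.
    apply: bigmax_le => [|[a b] _ /=].
    - apply: le_trans (ltW hx). apply/RleP. exact: Rabs_pos.
    - rewrite (ord1 a). apply: le_trans (entry_bound n v M _ b) _.
      + move=> i hi. by apply: (hM _ hv); apply/ssrnat.ltP.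
      + apply/RleP. lra. }
  have hc : closed A.
  { rewrite -[A]setCK. apply: open_closedC. rewrite openE => v /= hv.
    have [d [hd hd']] := hcl _ hv.
    have hd2 : Rlt 0 (d / 2) by lra.
    apply/nbhs_ballP. exists (d / 2)%coqR; first by apply/RltP.
    move=> w [_ hw] /= hKw. apply: (hd' (psiv n w)) hKw => i hi.
    have hh : forall j, `|v ord0 j - w ord0 j| < (d / 2)%coqR.
    { move=> j. have := hw ord0 j. by rewrite /ball /=. }
    have hi' : (i < n)%N by apply/ssrnat.ltP.
    have := psiv_lip n v w (d / 2)%coqR hh i hi'.
    change (Rlt (Cnorm (Csub (psiv n v i) (psiv n w i))) (d / 2 + d / 2)%coqR ->
       Rlt (Cnorm (Csub (psiv n v i) (psiv n w i))) d).
    move=> h. have e : (d / 2 + d / 2)%coqR = d by field. rewrite -e. apply: h. }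
  have hcomp : compact A by apply: bounded_closed_compact.
  rewrite compact_cover in hcomp.
  pose iota := fun v : 'rV[R]_(n+n) => epsilon (inhabits i0) (fun i => U i (psiv n v)).
  pose f := fun v : 'rV[R]_(n+n) => [set w : 'rV[R]_(n+n) | U (iota v) (psiv n w)].
  have hfo : forall v, A v -> open (f v).
  { move=> v _. rewrite openE => w /= hw. have [r [hr hr']] := hUo (iota v) _ hw.
    have hr2 : Rlt 0 (r / 2) by lra.
    apply/nbhs_ballP. exists (r / 2)%coqR; first by apply/RltP.
    move=> u [_ hu] /=. apply: hr' => i hi.
    have hh : forall j, `|w ord0 j - u ord0 j| < (r / 2)%coqR.
    { move=> j. have := hu ord0 j. by rewrite /ball /=. }
    have hi' : (i < n)%N by apply/ssrnat.ltP.
    have := psiv_lip n w u (r / 2)%coqR hh i hi'.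
    change (Rlt (Cnorm (Csub (psiv n w i) (psiv n u i))) (r / 2 + r / 2)%coqR ->
       Rlt (Cnorm (Csub (psiv n w i) (psiv n u i))) r).
    move=> h. have e : (r / 2 + r / 2)%coqR = r by field. rewrite -e. apply: h. }
  have hAc : A `<=` cover A f.
  { move=> v hv. exists v => //. rewrite /f /= /iota. apply: (epsilon_spec (inhabits i0) (fun i => U i (psiv n v))). exact: hcov _ hv. }
  have [D' hD' hcovD] := hcomp _ A f hfo hAc.
  exists (List.map iota (enum_fset D')) => p hp.
  have hA : A (phiv n p).
  { apply: (inv p) hp => i hi. rewrite psiv_phiv //. by apply/ssrnat.ltP. }
  have [w hw hfw] := hcovD _ hA.
  exists (iota w). split.
  - apply: List.in_map. exact: In_mem.
  - apply: (Uinv _ (psiv n (phiv n p))) hfw => i hi. rewrite psiv_phiv //. by apply/ssrnat.ltP.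
Qed.
End HBT.

Lemma poly_ext m c c' x : (1 <= m)%nat -> (forall k, (1 <= k)%nat -> (k < m)%nat -> c k = c' k) ->
  poly m c x = poly m c' x.
Proof.
  intros hm h. rewrite !poly_fp by auto. unfold fp. apply Fsum_ext. intros i hi.
  unfold pc. destruct (Nat.eqb i 0) eqn:E0; auto. destruct (Nat.eqb i m) eqn:Em; auto.
  apply Nat.eqb_neq in E0, Em. rewrite h; auto; lia.
Qed.

Lemma dpoly_ext m c c' x : (1 <= m)%nat -> (forall k, (1 <= k)%nat -> (k < m)%nat -> c k = c' k) ->
  dpoly m c x = dpoly m c' x.
Proof.
  intros hm h. rewrite !dpoly_fp by auto. unfold fp. apply Fsum_ext. intros i hi.
  unfold dc. destruct (Nat.eqb (S i) m) eqn:E; auto.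
  apply Nat.eqb_neq in E. rewrite h; auto; lia.
Qed.

Lemma Fsum_scale k t w : Cmul w (Fsum k t) = Fsum k (fun i => Cmul w (t i)).
Proof. induction k; simpl. Ceq. rewrite <- IHk. Ceq. Qed.

Lemma Cpow_scale (sg : R) z i : Cpow (Cmul (CofR sg) z) i = Cmul (CofR (sg ^ i)) (Cpow z i).
Proof. induction i; simpl. Ceq. rewrite IHi. Ceq. Qed.

Definition cscale (m : nat) (c : nat -> C) (sg : R) (k : nat) : C :=
  Cmul (CofR (/ sg ^ (m - k))) (c k).

Lemma poly_scale m c sg z : (1 <= m)%nat -> 0 < sg ->
  poly m c (Cmul (CofR sg) z) = Cmul (CofR (sg ^ m)) (poly m (cscale m c sg) z).
Proof.
  intros hm hs. rewrite !poly_fp by auto. unfold fp. rewrite Fsum_scale. apply Fsum_ext. intros i hi.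
  rewrite Cpow_scale. unfold pc, cscale. destruct (Nat.eqb i 0) eqn:E0. Ceq.
  destruct (Nat.eqb i m) eqn:Em. apply Nat.eqb_eq in Em. subst. Ceq.
  apply Nat.eqb_neq in E0, Em.
  assert (e1 : sg ^ m = sg ^ i * sg ^ (m - i)) by (rewrite <- pow_add; f_equal; lia).
  assert (sg ^ (m - i) <> 0) by (apply pow_nonzero; lra).
  destruct (c i) as [u v]. destruct z as [z1 z2]. destruct (Cpow (z1, z2) i) as [w1 w2].
  unfold Cmul, CofR; simpl. rewrite e1. f_equal; field; auto.
Qed.

Lemma dpoly_scale m c sg z : (1 <= m)%nat -> 0 < sg ->
  dpoly m c (Cmul (CofR sg) z) = Cmul (CofR (sg ^ (m - 1))) (dpoly m (cscale m c sg) z).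
Proof.
  intros hm hs. rewrite !dpoly_fp by auto. unfold fp. rewrite Fsum_scale. apply Fsum_ext. intros i hi.
  rewrite Cpow_scale. unfold dc, cscale. destruct (Nat.eqb (S i) m) eqn:Em.
  apply Nat.eqb_eq in Em. subst. replace (S i - 1)%nat with i by lia. Ceq.
  apply Nat.eqb_neq in Em.
  assert (e1 : sg ^ (m - 1) = sg ^ i * sg ^ (m - S i)) by (rewrite <- pow_add; f_equal; lia).
  assert (sg ^ (m - S i) <> 0) by (apply pow_nonzero; lra).
  destruct (c (S i)) as [u v]. destruct z as [z1 z2]. destruct (Cpow (z1, z2) i) as [w1 w2].
  unfold Cmul, CofR; simpl. rewrite e1. f_equal; field; auto.
Qed.

Lemma max_lt1 (f : nat -> R) n : (forall i, (i < n)%nat -> f i < 1) -> exists M, M < 1 /\ forall i, (i < n)%nat -> f i <= M.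
Proof.
  induction n; intros h. exists 0; split; [lra| intros; lia].
  destruct IHn as [M [hM hM']]. intros; apply h; lia.
  exists (Rmax M (f n)). split. unfold Rmax; destruct (Rle_dec M (f n)); auto; apply h; lia.
  intros i hi. destruct (Nat.eq_dec i n). subst; apply Rmax_r. eapply Rle_trans; [apply hM'; lia|apply Rmax_l].
Qed.

Section KL.
Variable m : nat.
Hypothesis hm : (2 <= m)%nat.

Definition cofu (u : nat -> C) (k : nat) : C := u (k - 1)%nat.

Definition Bset (u : nat -> C) : Prop :=
  (forall i, (i < m - 1)%nat -> Cnorm (u i) <= 2 ^ (m - 1 - i)) /\ (exists i, (i < m - 1)%nat /\ 1 <= Cnorm (u i)).

Definition Uset (j : nat) (u : nat -> C) : Prop :=
  exists z, dpoly m (cofu u) z = C0 /\ / INR (S j) < Cnorm (poly m (cofu u) z).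

Lemma Bset_bounded : exists M, forall p, Bset p -> forall i, lt i (m - 1) -> Rle (Cnorm (p i)) M.
Proof.
  exists (2 ^ m). intros p [h _] i hi. eapply Rle_trans. apply h; auto. apply Rle_pow; lra || lia.
Qed.

Lemma Bset_closed : forall q, ~ Bset q -> exists d, Rlt 0 d /\ forall p, dist_n (m - 1) q p d -> ~ Bset p.
Proof.
  intros q hq. unfold Bset in hq. apply not_and_or in hq. destruct hq as [hA|hB].
  - apply not_all_ex_not in hA. destruct hA as [i hi]. apply imply_to_and in hi. destruct hi as [hi1 hi2].
    apply Rnot_le_lt in hi2. exists (Cnorm (q i) - 2 ^ (m - 1 - i)). split. lra.
    intros p hp [hpA _]. pose proof (hpA i hi1). pose proof (hp i hi1). change (Cnorm (Csub (q i) (p i)) < Cnorm (q i) - 2 ^ (m - 1 - i)) in H0.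
    pose proof (Cnorm_rev (q i) (p i)). lra.
  - assert (h1 : forall i, (i < m - 1)%nat -> Cnorm (q i) < 1).
    { intros i hi. apply Rnot_le_lt. intro hc. apply hB. exists i; auto. }
    destruct (max_lt1 (fun i => Cnorm (q i)) (m - 1) h1) as [M [hM hM']].
    exists (1 - M). split. lra. intros p hp [_ [i [hi hpi]]].
    pose proof (hp i hi). change (Cnorm (Csub (q i) (p i)) < 1 - M) in H.
    pose proof (Cnorm_rev (p i) (q i)). rewrite Cnorm_sub_sym in H. pose proof (hM' i hi). lra.
Qed.

Lemma Uset_open j : open_n (m - 1) (Uset j).
Proof.
  intros u [z [hz hgap]].
  set (g := Cnorm (poly m (cofu u) z) - / INR (S j)). assert (hg : 0 < g) by (unfold g; lra).
  destruct (fin_bound_lt (fun i => Cnorm (u i)) (m - 1)) as [Mu0 [hMu0 hu]].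
  set (Mu := Mu0 + 1). assert (hMu : 1 <= Mu) by (unfold Mu; lra).
  set (r := Cnorm z + 1). assert (hr : 1 <= r) by (unfold r; pose proof (Cnorm_ge0 z); lra).
  set (K := INR (S m) * r ^ m * (1 + Mu * INR m)).
  assert (hK : 0 < K).
  { unfold K. assert (0 < INR (S m)) by (apply lt_0_INR; lia). assert (0 < r ^ m) by (apply pow_lt; lra).
    assert (0 <= Mu * INR m) by (apply Rmult_le_pos; [lra|apply pos_INR]). repeat apply Rmult_lt_0_compat; lra. }
  set (eps := Rmin 1 (g / (2 * K))).
  assert (heps : 0 < eps) by (unfold eps; apply Rmin_glb_lt; [lra|apply Rdiv_lt_0_compat; lra]).
  assert (heps1 : eps <= 1) by apply Rmin_l. assert (heps2 : eps <= g / (2 * K)) by apply Rmin_r.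
  rewrite dpoly_fp in hz by lia.
  destruct (rc (m - 1) (dc m (cofu u)) z) with (e := eps) as [eta [heta h]]; auto.
  { rewrite dc_lead by lia. apply INR_neq0; lia. }
  assert (hm0 : 0 < INR m) by (apply lt_0_INR; lia).
  exists (Rmin eps (eta / INR m)). split. apply Rmin_glb_lt; auto. apply Rdiv_lt_0_compat; auto.
  intros u' hu'. set (del := Rmin eps (eta / INR m)) in *.
  assert (hd1 : del <= eps) by apply Rmin_l. assert (hd2 : del <= eta / INR m) by apply Rmin_r.
  assert (hd0 : 0 < del) by (apply Rmin_glb_lt; auto; apply Rdiv_lt_0_compat; auto).
  assert (hcl : forall k, (1 <= k)%nat -> (k < m)%nat -> Cnorm (Csub (cofu u' k) (cofu u k)) < del).
  { intros k h1 h2. unfold cofu. apply dist_get with (m - 1)%nat; auto. lia. }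
  destruct (h (dc m (cofu u'))) as [z' [hz'1 hz'2]].
  { rewrite !dc_lead by lia. auto. }
  { intros i hi. apply Rle_trans with (INR m * del). apply dc_close; auto. lia. lra.
    apply Rle_trans with (INR m * (eta / INR m)). apply Rmult_le_compat_l; lra. right; field; lra. }
  exists z'. split. rewrite dpoly_fp by lia. auto.
  assert (hb : forall i, (i <= m)%nat -> Cnorm (pc m (cofu u) i) <= Mu).
  { apply pc_bound; auto. intros i h1 h2. unfold cofu. unfold Mu. pose proof (hu (i - 1)%nat ltac:(lia)). lra. }
  assert (hpl : Cnorm (Csub (fp m (pc m (cofu u')) z') (fp m (pc m (cofu u)) z)) <= K * eps).
  { apply fp_lip_q; auto; try lra.
    - pose proof (Cnorm_rev z' z). rewrite Cnorm_sub_sym in hz'2. unfold r. lra.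
    - unfold r; lra.
    - intros i hi. apply Rle_trans with del; auto. apply pc_close; auto. lra.
    - rewrite Cnorm_sub_sym. lra. }
  rewrite <- !poly_fp in hpl by lia.
  assert (K * eps <= g / 2).
  { apply Rle_trans with (K * (g / (2 * K))). apply Rmult_le_compat_l; lra. right; field; lra. }
  pose proof (Cnorm_rev (poly m (cofu u) z) (poly m (cofu u') z')). rewrite Cnorm_sub_sym in H0.
  unfold g in *. lra.
Qed.

Lemma Bset_cover : forall u, Bset u -> exists j, Uset j u.
Proof.
  intros u [hA [i [hi hui]]].
  destruct (Classical_Prop.classic (exists z, dpoly m (cofu u) z = C0 /\ poly m (cofu u) z <> C0)) as [[z [hz1 hz2]]|hno].
  - assert (hp : 0 < Cnorm (poly m (cofu u) z)).
    { pose proof (Cnorm_ge0 (poly m (cofu u) z)). destruct (Req_dec (Cnorm (poly m (cofu u) z)) 0).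
      exfalso; apply hz2, Cnorm_eq0; auto. lra. }
    destruct (INR_unbounded (/ Cnorm (poly m (cofu u) z))) as [j hj].
    exists j. exists z. split; auto.
    rewrite S_INR. apply Rlt_le_trans with (/ / Cnorm (poly m (cofu u) z)).
    apply Rinv_lt_contravar. apply Rmult_lt_0_compat. apply Rinv_0_lt_compat; auto.
    pose proof (pos_INR j); lra. lra. rewrite Rinv_inv. lra.
  - exfalso. assert (hc : forall z, dpoly m (cofu u) z = C0 -> poly m (cofu u) z = C0).
    { intros z hz. apply NNPP. intro hn. apply hno. exists z; auto. }
    pose proof (AL2.alg_lemma m (cofu u) hm hc (S i) ltac:(lia) ltac:(lia)) as h0.
    unfold cofu in h0. replace (S i - 1)%nat with i in h0 by lia. rewrite h0, Cnorm_C0 in hui. lra.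
Qed.

Lemma KL_norm : exists kap, 0 < kap /\ forall c,
  (forall k, (1 <= k)%nat -> (k < m)%nat -> Cnorm (c k) <= 2 ^ (m - k)) ->
  (exists k, (1 <= k)%nat /\ (k < m)%nat /\ 1 <= Cnorm (c k)) ->
  exists z, dpoly m c z = C0 /\ kap <= Cnorm (poly m c z).
Proof.
  pose proof (HBT.HB_compact (m - 1) Bset Bset_bounded Bset_closed nat Uset Uset_open Bset_cover) as hc.
  destruct hc as [l hl].
  set (J := fold_right Nat.max O l).
  assert (hJ : forall j, In j l -> (j <= J)%nat).
  { unfold J. clear hl. induction l as [|a l IH]; simpl; intros j hj. contradiction.
    destruct hj as [<-|hj]. lia. specialize (IH j hj). lia. }
  exists (/ INR (S J)). split. apply Rinv_0_lt_compat, lt_0_INR; lia.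
  intros c hc1 [k [hk1 [hk2 hk3]]].
  set (u := fun i => c (S i)).
  assert (hcu : forall k, (1 <= k)%nat -> (k < m)%nat -> cofu u k = c k).
  { intros k' h1 h2. unfold cofu, u. f_equal; lia. }
  assert (hB : Bset u).
  { split. intros i hi. unfold u. replace (m - 1 - i)%nat with (m - S i)%nat by lia. apply hc1; lia.
    exists (k - 1)%nat. split. lia. unfold u. replace (S (k - 1)) with k by lia. auto. }
  destruct (hl u hB) as [j [hj [z [hz1 hz2]]]].
  exists z. split.
  - rewrite (dpoly_ext m c (cofu u)); auto. lia. intros; symmetry; apply hcu; auto.
  - rewrite (poly_ext m c (cofu u)); auto. 2: lia. 2: intros; symmetry; apply hcu; auto.
    apply Rle_trans with (/ INR (S j)); [|lra].
    apply Rinv_le_contravar. apply lt_0_INR; lia. apply le_INR. specialize (hJ j hj). lia.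
Qed.
End KL.

Lemma Cnorm_cscale m c sg k : 0 < sg -> Cnorm (cscale m c sg k) = Cnorm (c k) / sg ^ (m - k).
Proof.
  intro hs. unfold cscale. rewrite Cnorm_mul, Cnorm_CofR. rewrite Rabs_right.
  unfold Rdiv; ring. apply Rle_ge, Rlt_le, Rinv_0_lt_compat, pow_lt; auto.
Qed.

Lemma KL_scaled m : (2 <= m)%nat -> exists kap, 0 < kap /\ forall c sg, 0 < sg ->
  (forall k, (1 <= k)%nat -> (k < m)%nat -> Cnorm (c k) <= (2 * sg) ^ (m - k)) ->
  (exists k, (1 <= k)%nat /\ (k < m)%nat /\ sg ^ (m - k) <= Cnorm (c k)) ->
  exists z, dpoly m c z = C0 /\ kap * sg ^ m <= Cnorm (poly m c z).
Proof.
  intro hm. destruct (KL_norm m hm) as [kap [hk h]]. exists kap. split; auto.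
  intros c sg hs h1 [k [hk1 [hk2 hk3]]].
  destruct (h (cscale m c sg)) as [z [hz1 hz2]].
  - intros k' h1' h2'. rewrite Cnorm_cscale by auto.
    assert (0 < sg ^ (m - k')) by (apply pow_lt; auto).
    apply Rmult_le_reg_r with (sg ^ (m - k')); auto. unfold Rdiv. rewrite Rmult_assoc, Rinv_l, Rmult_1_r by lra.
    rewrite <- Rpow_mult_distr. apply h1; auto.
  - exists k. repeat split; auto. rewrite Cnorm_cscale by auto.
    assert (0 < sg ^ (m - k)) by (apply pow_lt; auto).
    apply Rmult_le_reg_r with (sg ^ (m - k)); auto. unfold Rdiv. rewrite Rmult_assoc, Rinv_l, Rmult_1_r by lra. lra.
  - exists (Cmul (CofR sg) z). split.
    + rewrite dpoly_scale, hz1 by (auto; lia). Ceq.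
    + rewrite poly_scale, Cnorm_mul, Cnorm_CofR by (auto; lia).
      rewrite Rabs_right by (apply Rle_ge, pow_le; lra).
      assert (0 < sg ^ m) by (apply pow_lt; auto). nra.
Qed.

Lemma min_nat (P : nat -> Prop) j0 : P j0 -> exists j, P j /\ (j = O \/ ~ P (j - 1)%nat).
Proof.
  induction j0; intro h. exists O; auto.
  destruct (Classical_Prop.classic (P j0)) as [h'|h']. apply IHj0; auto.
  exists (S j0). split; auto. right. replace (S j0 - 1)%nat with j0 by lia. auto.
Qed.

Lemma INR_le_pow2 j : INR j <= 2 ^ j.
Proof. induction j. simpl; lra. rewrite S_INR. simpl. assert (1 <= 2 ^ j) by (apply pow_R1_Rle; lra). lra. Qed.

Lemma scale_exists m (c : nat -> C) : exists j,
  (forall k, (1 <= k)%nat -> (k < m)%nat -> Cnorm (c k) <= (2 ^ j) ^ (m - k)) /\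
  (j = O \/ exists k, (1 <= k)%nat /\ (k < m)%nat /\ (2 ^ (j - 1)) ^ (m - k) < Cnorm (c k)).
Proof.
  set (P := fun j => forall k, (1 <= k)%nat -> (k < m)%nat -> Cnorm (c k) <= (2 ^ j) ^ (m - k)).
  destruct (fin_bound_lt (fun i => Cnorm (c i)) m) as [Mc [hMc hc]].
  destruct (INR_unbounded Mc) as [j0 hj0].
  assert (P j0).
  { intros k h1 h2. apply Rle_trans with (2 ^ j0).
    pose proof (INR_le_pow2 j0). pose proof (hc k h2). lra.
    replace (m - k)%nat with (S (m - k - 1)) by lia. simpl.
    rewrite <- (Rmult_1_r (2 ^ j0)) at 1. apply Rmult_le_compat_l. apply pow_le; lra.
    apply pow_R1_Rle. apply pow_R1_Rle; lra. }
  destruct (min_nat P j0 H) as [j [hj1 hj2]]. exists j. split; auto.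
  destruct hj2 as [hj2|hj2]; auto. right. unfold P in hj2.
  apply not_all_ex_not in hj2. destruct hj2 as [k hk].
  apply imply_to_and in hk. destruct hk as [hk1 hk]. apply imply_to_and in hk. destruct hk as [hk2 hk].
  exists k. repeat split; auto. apply Rnot_le_lt; auto.
Qed.

Lemma exists_root m c : (1 <= m)%nat -> c m <> C0 -> exists r, fp m c r = C0.
Proof.
  intros hm hc. destruct (Bridge.fact_fp m c hc) as [rs [hl hf]].
  destruct rs as [|r rs]. simpl in hl; lia.
  exists r. rewrite hf. rewrite Cprod_in_zero by (left; auto). Ceq.
Qed.

Section Bound.
Variables (d e : nat).
Hypothesis he : (1 <= e)%nat.
Hypothesis hde : (e < d)%nat.
Notation n := (d + e - 2)%nat.

Definition ES (t x : R) (s : R) : Prop :=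
  2 * INR d * s <= x /\ 2 * INR (S e) * 2 ^ e < x /\ 2 * INR (S e) * t ^ e < x ^ d.

Lemma ES_mono s t x y : 0 <= x -> ES t x s -> x <= y -> ES t y s.
Proof.
  intros h0 [h1 [h2 h3]] hxy. split; [lra|split; [lra|]].
  assert (x ^ d <= y ^ d) by (apply pow_incr; lra). lra.
Qed.

Lemma ES_ge1 s t x : ES t x s -> 1 <= x.
Proof.
  intros [_ [h _]]. assert (1 <= INR (S e)) by (apply (le_INR 1); lia).
  assert (1 <= 2 ^ e) by (apply pow_R1_Rle; lra). nra.
Qed.

Lemma ES_unbounded p s t x : 1 <= s -> 1 <= t ->
  (forall k, (1 <= k)%nat -> (k < d)%nat -> Cnorm (coef_a d p k) <= s ^ (d - k)) ->
  (forall k, (1 <= k)%nat -> (k < e)%nat -> Cnorm (coef_b d e p k) <= t ^ (e - k)) ->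
  ES t (Cnorm (x O)) s -> (forall k, in_corr d e p (x k) (x (S k))) -> ~ bounded_seq x.
Proof.
  intros hs ht ha hb hE hp [Bd hBd].
  assert (hk : forall k, ES t (Cnorm (x k)) s /\ Cnorm (x O) + INR k <= Cnorm (x k)).
  { induction k. simpl; split; auto; lra.
    destruct IHk as [hEk hk]. destruct hEk as [h1 [h2 h3]].
    pose proof (esc_gen d e p s t (x k) (x (S k)) he hde hs ht ha hb h1 h2 h3 (hp k)) as hy.
    pose proof (ES_ge1 s t (Cnorm (x k)) (conj h1 (conj h2 h3))).
    split. apply ES_mono with (Cnorm (x k)). apply Cnorm_ge0. split; auto. lra.
    rewrite S_INR. lra. }
  destruct (INR_unbounded (Bd - Cnorm (x O))) as [j hj].
  destruct (hk j) as [_ h]. pose proof (hBd j). lra.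
Qed.

Lemma succ_ES p s t a : 1 <= s -> 1 <= t ->
  (forall k, (1 <= k)%nat -> (k < d)%nat -> Cnorm (coef_a d p k) <= s ^ (d - k)) ->
  (forall k, (1 <= k)%nat -> (k < e)%nat -> Cnorm (coef_b d e p k) <= t ^ (e - k)) ->
  (forall y, in_corr d e p a y -> ES t (Cnorm y) s) ->
  ~ exists x, is_path d e p a x /\ bounded_seq x.
Proof.
  intros hs ht ha hb hy [x [[hx0 hxp] [Bd hBd]]].
  apply (ES_unbounded p s t (fun k => x (S k)) hs ht ha hb).
  - apply hy. rewrite <- hx0. apply hxp.
  - intro k. apply hxp.
  - exists Bd. intro k. apply hBd.
Qed.
End Bound.

Lemma pow_split_ge x a b : 1 <= x -> (a < b)%nat -> x ^ a * x <= x ^ b.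
Proof.
  intros hx hab. replace b with (a + (b - a))%nat by lia. rewrite pow_add.
  apply Rmult_le_compat_l. apply pow_le; lra.
  replace (b - a)%nat with (S (b - a - 1)) by lia. simpl. rewrite <- (Rmult_1_r x) at 1.
  apply Rmult_le_compat_l. lra. apply pow_R1_Rle; lra.
Qed.

Section Bound2.
Variables (d e : nat).
Hypothesis he : (1 <= e)%nat.
Hypothesis hde : (e < d)%nat.

Lemma caseA p s t c A : 0 < A -> 1 <= s -> 1 <= t ->
  (forall k, (1 <= k)%nat -> (k < e)%nat -> Cnorm (coef_b d e p k) <= t ^ (e - k)) ->
  A * s ^ d <= Cnorm (fpol d p c) -> INR (S e) * t ^ e < A * s ^ d ->
  INR (S e) * (2 * INR d) ^ e / A + 2 * INR (S e) * 2 ^ e + 1 <= s ->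
  forall y, in_corr d e p c y -> ES d e t (Cnorm y) s.
Proof.
  intros hA hs ht hb hfc hts hsA y hy.
  pose proof (poly_upper e (coef_b d e p) t y he ht hb) as hu.
  change (poly e (coef_b d e p) y) with (gpol d e p y) in hu. rewrite hy in hu.
  set (Y := Cnorm y) in *. assert (hY0 : 0 <= Y) by apply Cnorm_ge0.
  assert (hS : 1 <= INR (S e)) by (apply (le_INR 1); lia).
  assert (h2e : 1 <= 2 ^ e) by (apply pow_R1_Rle; lra).
  assert (hd1 : 1 <= INR d) by (apply (le_INR 1); lia).
  unfold Rmax in hu. destruct (Rle_dec Y t) as [hYt|hYt]. lra.
  apply Rnot_le_lt in hYt.
  assert (hsd : s ^ e * s <= s ^ d) by (apply pow_split_ge; auto).
  assert (hse : 0 < s ^ e) by (apply pow_lt; lra).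
  assert (h1 : 2 * INR d * s <= Y).
  { destruct (Rle_dec (2 * INR d * s) Y) as [ok|no]; auto. exfalso. apply Rnot_le_lt in no.
    assert (Y ^ e <= (2 * INR d * s) ^ e) by (apply pow_incr; lra).
    rewrite Rpow_mult_distr in H.
    assert (A * (s ^ e * s) <= INR (S e) * ((2 * INR d) ^ e * s ^ e)).
    { apply Rle_trans with (A * s ^ d). apply Rmult_le_compat_l; lra.
      apply Rle_trans with (INR (S e) * Y ^ e). lra. apply Rmult_le_compat_l; lra. }
    assert (A * s <= INR (S e) * (2 * INR d) ^ e).
    { apply Rmult_le_reg_r with (s ^ e); auto. nra. }
    assert (s <= INR (S e) * (2 * INR d) ^ e / A).
    { apply Rmult_le_reg_l with A; auto. replace (A * (INR (S e) * (2 * INR d) ^ e / A)) with (INR (S e) * (2 * INR d) ^ e) by (field; lra). lra. }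
    assert (0 < 2 * INR (S e) * 2 ^ e) by nra. lra. }
  assert (h2 : 2 * INR (S e) * 2 ^ e < Y).
  { assert (s <= 2 * INR d * s) by nra. assert (0 <= INR (S e) * (2 * INR d) ^ e / A).
    { apply Rmult_le_pos. apply Rmult_le_pos. lra. apply pow_le; lra. apply Rlt_le, Rinv_0_lt_compat; auto. }
    lra. }
  split; auto. split; auto.
  assert (hYe : t ^ e < Y ^ e).
  { assert (INR (S e) * t ^ e < INR (S e) * Y ^ e) by lra. nra. }
  assert (hYd : Y ^ e * Y <= Y ^ d) by (apply pow_split_ge; auto; lra).
  assert (0 < Y ^ e) by (apply pow_lt; lra).
  assert (2 * INR (S e) <= Y) by nra.
  nra.
Qed.

Lemma caseB p s t a b B B' : 0 < B' -> B' <= 1 -> B' <= B / INR (S e) -> 1 <= s -> 1 <= t ->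
  (forall k, (1 <= k)%nat -> (k < e)%nat -> Cnorm (coef_b d e p k) <= t ^ (e - k)) ->
  gpol d e p b = fpol d p a -> B * t ^ e <= Cnorm (gpol d e p b) ->
  2 * INR (S e) * 2 ^ e / B' + 2 * INR (S e) / B' ^ d + 1 <= t -> 2 * INR d * s <= B' * t ->
  forall y, in_corr d e p a y -> ES d e t (Cnorm y) s.
Proof.
  intros hB' hB1 hB2 hs ht hb hab hgb hTB hsB y hy.
  unfold in_corr in hy. rewrite <- hab in hy. rewrite <- hy in hgb.
  set (Y := Cnorm y) in *. assert (hY0 : 0 <= Y) by apply Cnorm_ge0.
  assert (hS : 1 <= INR (S e)) by (apply (le_INR 1); lia).
  assert (hYB : B' * t <= Y).
  { destruct (Rle_dec t Y) as [h|h]. nra. apply Rnot_le_lt in h.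
    pose proof (poly_upper_small e (coef_b d e p) t y he ht hb (Rlt_le _ _ h)) as hu.
    change (poly e (coef_b d e p) y) with (gpol d e p y) in hu.
    assert (hte : t ^ e = t * t ^ (e - 1)) by (replace e with (S (e - 1)) at 1 by lia; reflexivity).
    assert (0 < t ^ (e - 1)) by (apply pow_lt; lra).
    assert (B * t <= INR (S e) * Y).
    { apply Rmult_le_reg_r with (t ^ (e - 1)); auto. rewrite Rmult_assoc, <- hte. fold Y in hu. nra. }
    assert (B' * INR (S e) <= B).
    { apply Rle_trans with (B / INR (S e) * INR (S e)). apply Rmult_le_compat_r; lra. right; field; lra. }
    nra. }
  assert (h2e : 1 <= 2 ^ e) by (apply pow_R1_Rle; lra).
  split. lra. split.
  - assert (2 * INR (S e) * 2 ^ e / B' < t).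
    { assert (0 <= 2 * INR (S e) / B' ^ d). apply Rmult_le_pos. lra. apply Rlt_le, Rinv_0_lt_compat, pow_lt; lra. lra. }
    assert (2 * INR (S e) * 2 ^ e < B' * t).
    { apply Rmult_lt_reg_r with (/ B'). apply Rinv_0_lt_compat; lra.
      replace (B' * t * / B') with t by (field; lra). lra. }
    lra.
  - assert (hBd : 0 < B' ^ d) by (apply pow_lt; lra).
    assert (h1 : 2 * INR (S e) / B' ^ d < t).
    { assert (0 <= 2 * INR (S e) * 2 ^ e / B'). apply Rmult_le_pos. nra. apply Rlt_le, Rinv_0_lt_compat; lra. lra. }
    assert (h1' : 2 * INR (S e) < B' ^ d * t).
    { apply Rmult_lt_reg_r with (/ B' ^ d). apply Rinv_0_lt_compat; lra.
      replace (B' ^ d * t * / B' ^ d) with t by (field; lra). lra. }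
    assert (hYd : (B' * t) ^ d <= Y ^ d) by (apply pow_incr; nra).
    rewrite Rpow_mult_distr in hYd.
    assert (htd : t ^ e * t <= t ^ d) by (apply pow_split_ge; auto).
    assert (0 < t ^ e) by (apply pow_lt; lra).
    assert (B' ^ d * (t ^ e * t) <= B' ^ d * t ^ d) by (apply Rmult_le_compat_l; lra).
    nra.
Qed.
End Bound2.

Section Main.
Variables (d e : nat).
Hypothesis he : (1 <= e)%nat.
Hypothesis hde : (e < d)%nat.

Lemma KLg : exists kg, 0 < kg /\ ((2 <= e)%nat -> forall c sg, 0 < sg ->
  (forall k, (1 <= k)%nat -> (k < e)%nat -> Cnorm (c k) <= (2 * sg) ^ (e - k)) ->
  (exists k, (1 <= k)%nat /\ (k < e)%nat /\ sg ^ (e - k) <= Cnorm (c k)) ->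
  exists z, dpoly e c z = C0 /\ kg * sg ^ e <= Cnorm (poly e c z)).
Proof.
  destruct (le_lt_dec 2 e) as [h|h].
  - destruct (KL_scaled e h) as [kg [hk hk']]. exists kg; split; auto.
  - exists 1. split. lra. intros; lia.
Qed.

Lemma S_bounded : exists M, forall p, S_de d e p -> forall i, (i < d + e - 2)%nat -> Cnorm (p i) <= M.
Proof.
  destruct (KL_scaled d ltac:(lia)) as [kf [hkf KLf]].
  destruct KLg as [kg [hkg KLg']].
  set (A := kf / 2 ^ d). set (B := kg / 2 ^ e). set (B' := Rmin 1 (B / INR (S e))).
  assert (hS : 1 <= INR (S e)) by (apply (le_INR 1); lia).
  assert (hd1 : 1 <= INR d) by (apply (le_INR 1); lia).
  assert (h2e : 1 <= 2 ^ e) by (apply pow_R1_Rle; lra).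
  assert (hA : 0 < A) by (unfold A; apply Rdiv_lt_0_compat; auto; apply pow_lt; lra).
  assert (hB : 0 < B) by (unfold B; apply Rdiv_lt_0_compat; auto; apply pow_lt; lra).
  assert (hB' : 0 < B') by (unfold B'; apply Rmin_glb_lt; [lra|apply Rdiv_lt_0_compat; lra]).
  assert (hB'1 : B' <= 1) by apply Rmin_l. assert (hB'2 : B' <= B / INR (S e)) by apply Rmin_r.
  set (SA := INR (S e) * (2 * INR d) ^ e / A + 2 * INR (S e) * 2 ^ e + 1).
  set (TB := 2 * INR (S e) * 2 ^ e / B' + 2 * INR (S e) / B' ^ d + 1).
  assert (hSA0 : 0 <= INR (S e) * (2 * INR d) ^ e / A).
  { apply Rmult_le_pos. apply Rmult_le_pos. lra. apply pow_le; lra. apply Rlt_le, Rinv_0_lt_compat; auto. }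
  assert (hTB0 : 1 <= TB).
  { unfold TB. assert (0 <= 2 * INR (S e) * 2 ^ e / B'). apply Rmult_le_pos. nra. apply Rlt_le, Rinv_0_lt_compat; lra.
    assert (0 <= 2 * INR (S e) / B' ^ d). apply Rmult_le_pos. lra. apply Rlt_le, Rinv_0_lt_compat, pow_lt; lra. lra. }
  set (X1 := INR (S e) / A). set (X2 := INR (S e) * TB ^ e / A). set (X3 := INR (S e) * (2 * INR d / B') ^ e / A).
  assert (hX1 : 0 <= X1) by (unfold X1; apply Rmult_le_pos; [lra|apply Rlt_le, Rinv_0_lt_compat; auto]).
  assert (hX2 : 0 <= X2).
  { unfold X2; apply Rmult_le_pos; [apply Rmult_le_pos; [lra|apply pow_le; lra]|apply Rlt_le, Rinv_0_lt_compat; auto]. }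
  assert (hX3 : 0 <= X3).
  { unfold X3; apply Rmult_le_pos; [apply Rmult_le_pos; [lra|apply pow_le; apply Rlt_le, Rdiv_lt_0_compat; lra]|apply Rlt_le, Rinv_0_lt_compat; auto]. }
  assert (hSA1 : 1 <= SA) by (unfold SA; nra).
  set (Sst := SA + X1 + X2 + X3 + 2).
  assert (hSst : SA + 2 <= Sst) by (unfold Sst; lra).
  assert (hSst1 : X1 + 2 <= Sst) by (unfold Sst; lra).
  assert (hSst2 : X2 + 2 <= Sst) by (unfold Sst; lra).
  assert (hSst3 : X3 + 2 <= Sst) by (unfold Sst; lra).
  set (Tst := TB + 2 * INR d * Sst / B' + 2).
  assert (hTst0 : 0 <= 2 * INR d * Sst / B').
  { apply Rmult_le_pos. nra. apply Rlt_le, Rinv_0_lt_compat; lra. }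
  assert (hTst2 : 2 <= Tst) by (unfold Tst; lra).
  assert (hTstTB : TB <= Tst) by (unfold Tst; lra).
  exists (Sst ^ d + Tst ^ e).
  intros p hSp.
  destruct (scale_exists d (coef_a d p)) as [js [hs1 hs2]].
  destruct (scale_exists e (coef_b d e p)) as [jt [ht1 ht2]].
  set (s := 2 ^ js) in *. set (t := 2 ^ jt) in *.
  assert (hs : 1 <= s) by (unfold s; apply pow_R1_Rle; lra).
  assert (ht : 1 <= t) by (unfold t; apply pow_R1_Rle; lra).
  assert (tB : jt <> O -> TB <= t -> 2 * INR d * s <= B' * t -> False).
  { intros hjt hTBt hst. destruct ht2 as [ht2|[k [hk1 [hk2 hk3]]]]. contradiction.
    set (sg := 2 ^ (jt - 1)). assert (hsg : 0 < sg) by (apply pow_lt; lra).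
    assert (h2sg : 2 * sg = t) by (unfold sg, t; replace jt with (S (jt - 1)) at 2 by lia; reflexivity).
    destruct (KLg' ltac:(lia) (coef_b d e p) sg hsg) as [b [hb1 hb2]].
    { intros; rewrite h2sg; auto. }
    { exists k. repeat split; auto. apply Rlt_le. exact hk3. }
    destruct (exists_root d (setc0 (fc d p) (Copp (gpol d e p b)))) as [a ha]. lia.
    { unfold setc0. destruct (Nat.eqb d 0) eqn:E. apply Nat.eqb_eq in E; lia. unfold fc. rewrite pc_m by lia. apply C1_neq0. }
    rewrite fp_setc0, <- fpol_fp in ha by lia. unfold fc in ha. rewrite pc_0 in ha.
    assert (hab : gpol d e p b = fpol d p a).
    { destruct (gpol d e p b) as [u v], (fpol d p a) as [u' v']. unfold Cadd, Csub, Copp, C0 in ha; simpl in ha.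
      injection ha; intros. f_equal; lra. }
    assert (hcr : critical_point d e p a).
    { right. exists b. split; auto. }
    destruct (hSp a hcr) as [x hx].
    apply (succ_ES d e he hde p s t a hs ht hs1 ht1); [|exists x; auto].
    apply (caseB d e he hde p s t a b B B'); auto.
    - change (gpol d e p b) with (poly e (coef_b d e p) b).
      apply Rle_trans with (kg * sg ^ e); auto. right. unfold B. rewrite <- h2sg, Rpow_mult_distr. field. apply pow_nonzero; lra.
  }
  assert (hsS : s < Sst).
  { apply Rnot_le_lt. intro hsS.
    assert (hjs : js <> O).
    { intro h0. assert (s = 1) by (unfold s; rewrite h0; reflexivity). lra. }
    destruct hs2 as [hs2|[k [hk1 [hk2 hk3]]]]. contradiction.
    set (sg := 2 ^ (js - 1)). assert (hsg : 0 < sg) by (apply pow_lt; lra).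
    assert (h2sg : 2 * sg = s) by (unfold sg, s; replace js with (S (js - 1)) at 2 by lia; reflexivity).
    destruct (KLf (coef_a d p) sg hsg) as [c [hc1 hc2]].
    { intros; rewrite h2sg; auto. }
    { exists k. repeat split; auto. apply Rlt_le. exact hk3. }
    assert (hfc : A * s ^ d <= Cnorm (fpol d p c)).
    { change (fpol d p c) with (poly d (coef_a d p) c). apply Rle_trans with (kf * sg ^ d); auto.
      right. unfold A. rewrite <- h2sg, Rpow_mult_distr. field. apply pow_nonzero; lra. }
    assert (hsd : s ^ e * s <= s ^ d) by (apply pow_split_ge; auto).
    assert (hse : 0 < s ^ e) by (apply pow_lt; lra).
    assert (hsd' : s <= s ^ d).
    { apply Rle_trans with (s ^ e * s); auto. rewrite <- (Rmult_1_l s) at 1. apply Rmult_le_compat_r; try lra. apply pow_R1_Rle; lra. }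
    destruct (Rlt_le_dec (INR (S e) * t ^ e) (A * s ^ d)) as [hlt|hge].
    - assert (hcr : critical_point d e p c) by (left; auto).
      destruct (hSp c hcr) as [x hx].
      apply (succ_ES d e he hde p s t c hs ht hs1 ht1); [|exists x; auto].
      apply (caseA d e he hde p s t c A); auto. fold SA. lra.
    - destruct (Nat.eq_dec jt 0) as [hjt|hjt].
      + assert (t = 1) by (unfold t; rewrite hjt; reflexivity).
        rewrite H, pow1 in hge.
        assert (s <= X1).
        { unfold X1. apply Rmult_le_reg_l with A; auto. replace (A * (INR (S e) / A)) with (INR (S e)) by (field; lra). nra. }
        lra.
      + apply (tB hjt).
        * apply Rnot_lt_le. intro hlt.
          assert (t ^ e <= TB ^ e) by (apply pow_incr; lra).
          assert (s <= X2).
          { unfold X2. apply Rmult_le_reg_l with A; auto. replace (A * (INR (S e) * TB ^ e / A)) with (INR (S e) * TB ^ e) by (field; lra). nra. }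
          lra.
        * apply Rnot_lt_le. intro hlt.
          assert (t < 2 * INR d * s / B').
          { apply Rmult_lt_reg_l with B'; auto. replace (B' * (2 * INR d * s / B')) with (2 * INR d * s) by (field; lra). lra. }
          assert (t ^ e <= (2 * INR d * s / B') ^ e) by (apply pow_incr; lra).
          replace (2 * INR d * s / B') with ((2 * INR d / B') * s) in H0 by (field; lra).
          rewrite Rpow_mult_distr in H0.
          assert (A * (s ^ e * s) <= INR (S e) * ((2 * INR d / B') ^ e * s ^ e)).
          { apply Rle_trans with (A * s ^ d). apply Rmult_le_compat_l; lra.
            apply Rle_trans with (INR (S e) * t ^ e). lra. apply Rmult_le_compat_l; lra. }
          assert (A * s <= INR (S e) * (2 * INR d / B') ^ e).
          { apply Rmult_le_reg_r with (s ^ e); auto. nra. }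
          assert (s <= X3).
          { unfold X3. apply Rmult_le_reg_l with A; auto.
            replace (A * (INR (S e) * (2 * INR d / B') ^ e / A)) with (INR (S e) * (2 * INR d / B') ^ e) by (field; lra). lra. }
          lra. }
  assert (htT : t < Tst).
  { apply Rnot_le_lt. intro htT.
    assert (hjt : jt <> O).
    { intro h0. assert (t = 1) by (unfold t; rewrite h0; reflexivity). lra. }
    apply (tB hjt). lra.
    apply Rle_trans with (2 * INR d * Sst). nra.
    apply Rle_trans with (B' * Tst). 2: apply Rmult_le_compat_l; lra.
    unfold Tst. replace (B' * (TB + 2 * INR d * Sst / B' + 2)) with (B' * TB + 2 * INR d * Sst + 2 * B') by (field; lra).
    nra. }
  intros i hi.
  assert (hSst1' : 1 <= Sst) by lra. assert (hTst1 : 1 <= Tst) by (unfold Tst; lra).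
  assert (0 <= Sst ^ d) by (apply pow_le; lra). assert (0 <= Tst ^ e) by (apply pow_le; lra).
  destruct (le_lt_dec (d - 1) i) as [hi'|hi'].
  - set (k := (e - 1 - (i - (d - 1)))%nat).
    assert (hpk : p i = coef_b d e p k) by (unfold coef_b, k; f_equal; lia).
    rewrite hpk. eapply Rle_trans. apply ht1; lia.
    apply Rle_trans with (Tst ^ (e - k)). apply pow_incr; lra.
    apply Rle_trans with (Tst ^ e). apply Rle_pow; auto; lia. lra.
  - set (k := (d - 1 - i)%nat).
    assert (hpk : p i = coef_a d p k) by (unfold coef_a, k; f_equal; lia).
    rewrite hpk. eapply Rle_trans. apply hs1; lia.
    apply Rle_trans with (Sst ^ (d - k)). apply pow_incr; lra.
    apply Rle_trans with (Sst ^ d). apply Rle_pow; auto; lia. lra.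
Qed.
End Main.


Theorem theorem1p5 (d e : nat) (he : (1 <= e)%nat) (hde : (e < d)%nat) :
  compact_n (d + e - 2) (S_de d e).
Proof.
  apply HBT.HB_compact.
  - exact (S_bounded d e he hde).
  - exact (S_closed d e he hde).
Qed.
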